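(* Consider a family of meshes with $\mathbb h\to0$ and stencil sizes satisfying (K1)–(K3). For every $x\in\Omega$ and every bounded $\phi:\overline\Omega\to\mathbb R$ with $\phi|_\Omega\in C^4(\Omega)$, $$\limsup_{\mathbb h\to0,\ y\to x,\ \xi\to0}\frac{S(\mathbb h,y,\phi(y)+\xi,\phi+\xi)}{\mathbb h}\le H(D^2\phi(x),f(x)),\qquad \liminf_{\mathbb h\to0,\ y\to x,\ \xi\to0}\frac{S(\mathbb h,y,\phi(y)+\xi,\phi+\xi)}{\mathbb h}\ge H(D^2\phi(x),f(x)).$$
   Context: Standing setting: $d\ge2$, $\Omega\subset\mathbb R^d$ a bounded open strictly convex domain, $f:\Omega\to[0,\infty)$ bounded and continuous, $g:\partial\Omega\to\mathbb R$ bounded and continuous. $\mathbb S$: real symmetric $d\times d$ matrices; $\mathbb S_+$: positive semidefinite ones; $\mathbb S_1=\{B\in\mathbb S_+:\operatorname{tr}B=1\}$; $A:B=\operatorname{tr}(A^TB)$; $H(A,f)=\sup_{B\in\mathbb S_1}(-B:A+f\sqrt[d]{\det B})$ for $A\in\mathbb S$, $f\ge0$. Mesh: $\mathcal T_h$ is a shape-regular simplicial partition whose union $\Omega_h$ satisfies $\Omega_h\subset\Omega$; its nodes are $\mathcal N_h=\mathcal N_h^I\cup\mathcal N_h^B$, where the boundary nodes $\mathcal N_h^B$ (nodes on $\partial\Omega_h$) lie on $\partial\Omega$ and $\mathcal N_h^I$ are the interior nodes. The mesh function $h$ is the upper semicontinuous function with $h(x)=\operatorname{diam}T$ for $x$ in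 the interior of $T\in\mathcal T_h$ (on element boundaries, the largest diameter of the adjacent elements), and $\mathbb h=\|h\|_{L^\infty}$ is the maximal element diameter. Functions on $\Omega_h$ are extended to $\overline\Omega$ by being constant along the outer normal directions of $\partial\Omega_h$. $B(\overline\Omega)$ denotes the bounded real functions on $\overline\Omega$. Controls: $\mathbf F\subset\mathbb R^{d\times d}\times\{\text{diagonal }d\times d\text{ matrices}\}$ is compact, the map $(\sigma,\lambda)\mapsto\sigma\lambda\sigma^T$ is a bijection from $\mathbf F$ onto $\mathbb S_1$, and every $\lambda$ occurring in $\mathbf F$ has nonnegative diagonal entries and the same trace $C>0$. For $B\in\mathbb S_1$, $(\sigma(B),\lambda(B))$ denotes its preimage; $\sigma_j$ is the $j$th column of $\sigma$ and $\lambda_j$ the $j$th diagonal entry of $\lambda$. Stencil size: $k=k(h,x)>0$ is such that $x\pm k(h,x)\sigma_j\in\overline\Omega_h$ for every $x\in\Omega_h$ and every column $\sigma_j$ of every $\sigma$ with $(\sigma,\lambda)\in\mathbf F$. With $\Omega_i=\{x\in\Omega:\operatorname{dist}(x,\partial\Omega)>1/i\}$: (K1) for each $i\in\mathbb N$, $\sup_{x\in\Omega_i}h(x)/k(h,x)\to0$ as $\mathbb h\to0$; (K2) for each $i$ there is $h'>0$ such that $x\mapsto k(h,x)$ is constant on $\Omega_i$ whenever $\mathbb h<h'$; (K3) $\sup_{x\in\Omega}k(h,x)\to0$ as $\mathbb h\to0$. Discrete Hamiltonian: for $B\in\mathbb S_1$, $s\in\mathbb R$, $\phi\in B(\overline\Omega)$,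 with $(\sigma,\lambda)=(\sigma(B),\lambda(B))$ and $k=k(h,x_i)$, set $L_h^B(s,\phi)(x_i)=-\sum_{j=1}^d\lambda_j\frac{\phi(x_i-k\sigma_j)-2s+\phi(x_i+k\sigma_j)}{k^2}+f(x_i)\sqrt[d]{\det B}$ for $x_i\in\mathcal N_h^I$, and $L_h^B(s,\phi)(x_i)=s-g(x_i)$ for $x_i\in\mathcal N_h^B$. Set $H_h(s,\phi)(x_i)=\sup_{B\in\mathbb S_1}L_h^B(s,\phi)(x_i)$ at nodes; $H_h(s,\phi)$ is extended to $\Omega_h$ by piecewise linear interpolation of the nodal values and to $\overline\Omega$ by constant extension along outer normals of $\partial\Omega_h$. Finally $S(\mathbb h,x,s,\phi):=\mathbb h\,H_h(s,\phi)(x)$ for $x\in\overline\Omega$. *)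

(* Defs.v *)
From Stdlib Require Import Reals ClassicalEpsilon.
From mathcomp Require Import all_boot all_fingroup.

Set Implicit Arguments.
Unset Strict Implicit.

Open Scope R_scope.

Definition vec (d : nat) := 'I_d -> R.
Definition mat (d : nat) := 'I_d -> 'I_d -> R.

Definition sumR {d : nat} (F : 'I_d -> R) : R := \big[Rplus/0]_(i < d) F i.

Definition vadd {d} (x y : vec d) : vec d := fun i => x i + y i.
Definition vsub {d} (x y : vec d) : vec d := fun i => x i - y i.
Definition vscale {d} (a : R) (x : vec d) : vec d := fun i => a * x i.
Definition vnorm {d} (x : vec d) : R := sqrt (sumR (fun i => x i * x i)).
Definition vdist {d} (x y : vec d) : R := vnorm (vsub x y).
Definition basis {d} (j : 'I_d) : vec d := fun i => if i == j then 1 else 0.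

Definition Rsup (P : R -> Prop) : R := epsilon (inhabits 0) (fun s => is_lub P s).

Definition is_open {d} (U : vec d -> Prop) :=
  forall x, U x -> exists r, 0 < r /\ forall y, vdist y x < r -> U y.
Definition clos {d} (U : vec d -> Prop) (x : vec d) :=
  forall r, 0 < r -> exists y, U y /\ vdist y x < r.
Definition interior_v {d} (U : vec d -> Prop) (x : vec d) :=
  exists r, 0 < r /\ forall y, vdist y x < r -> U y.
(* boundary of an open set *)
Definition bdry {d} (U : vec d -> Prop) (x : vec d) := clos U x /\ ~ U x.
Definition bounded_set {d} (U : vec d -> Prop) := exists M, forall x, U x -> vnorm x <= M.
Definition strictly_convex {d} (U : vec d -> Prop) :=
  forall x y, clos U x -> clos U y -> x <> y -> forall t, 0 < t < 1 ->
    U (vadd (vscale (1 - t) x) (vscale t y)).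
Definition bounded_on {d} (U : vec d -> Prop) (u : vec d -> R) :=
  exists M, forall x, U x -> Rabs (u x) <= M.
Definition cont_on {d} (U : vec d -> Prop) (u : vec d -> R) :=
  forall y, U y -> forall eps, 0 < eps -> exists del, 0 < del /\
    forall z, U z -> vdist z y < del -> Rabs (u z - u y) < eps.

Definition Omega_i {d} (Om : vec d -> Prop) (i : nat) (x : vec d) :=
  Om x /\ exists r, / INR i < r /\ forall z, bdry Om z -> r <= vdist x z.

Definition has_partial {d} (u : vec d -> R) (y : vec d) (j : 'I_d) (l : R) :=
  derivable_pt_lim (fun t => u (vadd y (vscale t (basis j)))) 0 l.

Fixpoint Ck {d} (m : nat) (U : vec d -> Prop) (u : vec d -> R) : Prop :=
  cont_on U u /\
  match m with
  | O => True
  | S m' => exists Du : 'I_d -> vec d -> R,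
      (forall j y, U y -> has_partial u y j (Du j y)) /\ forall j, Ck m' U (Du j)
  end.

Definition is_second_partial {d} (u : vec d -> R) (x : vec d) (i j : 'I_d) (a : R) :=
  exists r, 0 < r /\ exists g : vec d -> R,
    (forall y, vdist y x < r -> has_partial u y j (g y)) /\ has_partial g x i a.

Definition hessian {d} (u : vec d -> R) (x : vec d) : mat d :=
  epsilon (inhabits (fun _ _ => 0))
    (fun A : mat d => forall i j, is_second_partial u x i j (A i j)).

Definition trace {d} (A : mat d) : R := sumR (fun i => A i i).
Definition frob {d} (A B : mat d) : R := sumR (fun i => sumR (fun j => A i j * B i j)).
Definition symmetric {d} (A : mat d) := forall i j, A i j = A j i.
Definition psd {d} (A : mat d) :=
  symmetric A /\ forall v : vec d, 0 <= sumR (fun i => sumR (fun j => v i * A i j * v j)).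
Definition S1 {d} (B : mat d) := psd B /\ trace B = 1.

Definition det {d} (A : mat d) : R :=
  \big[Rplus/0]_(s : 'S_d)
     ((if odd_perm s then -1 else 1) * \big[Rmult/1]_(i < d) A i (s i)).

Definition root_d (d : nat) (x : R) : R :=
  if Rlt_dec 0 x then Rpower x (/ INR d) else 0.

Definition Hcont {d} (A : mat d) (fv : R) : R :=
  Rsup (fun v => exists B : mat d, S1 B /\ v = - frob B A + fv * root_d d (det B)).

(* a control is (sigma, lambda); lambda is the diagonal of the diagonal matrix *)
Definition ctrl_prod {d} (sg : mat d) (lam : vec d) : mat d :=
  fun i j => sumR (fun l => sg i l * lam l * sg j l).
Definition col {d} (sg : mat d) (j : 'I_d) : vec d := fun i => sg i j.

Definition controls_ok {d} (F : mat d -> vec d -> Prop) (C : R) :=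
  (* compact: bounded and (sequentially) closed in R^{dxd} x R^d *)
  (exists K, forall sg lam, F sg lam -> (forall i j, Rabs (sg i j) <= K) /\ (forall i, Rabs (lam i) <= K)) /\
  (forall (sgn : nat -> mat d) (lamn : nat -> vec d) sg lam,
      (forall n, F (sgn n) (lamn n)) ->
      (forall i j, Un_cv (fun n => sgn n i j) (sg i j)) ->
      (forall i, Un_cv (fun n => lamn n i) (lam i)) -> F sg lam) /\
  (* (sigma,lambda) |-> sigma lambda sigma^T is a bijection F -> S_1 *)
  (forall sg lam, F sg lam -> S1 (ctrl_prod sg lam)) /\
  (forall B, S1 B -> exists sg lam, F sg lam /\ ctrl_prod sg lam = B) /\
  (forall sg lam sg' lam', F sg lam -> F sg' lam' ->
      ctrl_prod sg lam = ctrl_prod sg' lam' -> sg = sg' /\ lam = lam') /\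
  (* nonnegative diagonal entries, common trace C > 0 *)
  0 < C /\
  (forall sg lam, F sg lam -> (forall i, 0 <= lam i) /\ sumR lam = C).

Definition simplex (d : nat) := 'I_d.+1 -> vec d.
Definition mesh (d : nat) := list (simplex d).

Definition bary {d} (T : simplex d) (p : vec d) (mu : 'I_d.+1 -> R) :=
  (forall i, 0 <= mu i) /\ \big[Rplus/0]_(i < d.+1) mu i = 1 /\
  p = (fun c => \big[Rplus/0]_(i < d.+1) (mu i * T i c)).
Definition in_simplex {d} (T : simplex d) (p : vec d) := exists mu, bary T p mu.

Definition diam {d} (T : simplex d) : R :=
  Rsup (fun r => exists p q, in_simplex T p /\ in_simplex T q /\ r = vdist p q).

(* closed union of the elements = clos of Omega_h *)
Definition Om_bar_h {d} (M : mesh d) (p : vec d) := exists T, List.In T M /\ in_simplex T p.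
Definition Om_h {d} (M : mesh d) : vec d -> Prop := interior_v (Om_bar_h M).

Definition is_node {d} (M : mesh d) (p : vec d) := exists T i, List.In T M /\ T i = p.
Definition interior_node {d} (M : mesh d) p := is_node M p /\ Om_h M p.
Definition boundary_node {d} (M : mesh d) p := is_node M p /\ ~ Om_h M p.

(* conforming: two elements meet in the common face spanned by shared vertices *)
Definition conforming {d} (M : mesh d) :=
  forall T1 T2 p, List.In T1 M -> List.In T2 M -> in_simplex T1 p -> in_simplex T2 p ->
    exists mu, bary T1 p mu /\ forall i, mu i <> 0 -> exists j, T2 j = T1 i.

Definition admissible_mesh {d} (Om : vec d -> Prop) (M : mesh d) :=
  conforming M /\ (forall p, Om_h M p -> Om p) /\
  (forall p, boundary_node M p -> bdry Om p).

Definition shape_regular {d} (Ms : nat -> mesh d) :=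
  exists c, 0 < c /\ forall n T, List.In T (Ms n) ->
    0 < diam T /\ exists z, forall p, vdist p z <= c * diam T -> in_simplex T p.

(* mesh function h(x): largest diameter of elements containing x (0 off the mesh) *)
Definition meshfun {d} (M : mesh d) (x : vec d) : R :=
  Rsup (fun r => r = 0 \/ exists T, List.In T M /\ in_simplex T x /\ r = diam T).
Definition hmax {d} (M : mesh d) : R :=
  Rsup (fun r => r = 0 \/ exists T, List.In T M /\ r = diam T).

Definition Lint {d} (f : vec d -> R) (k : vec d -> R) (s : R) (phi : vec d -> R)
    (p : vec d) (B sg : mat d) (lam : vec d) : R :=
  - sumR (fun j => lam j *
       ((phi (vsub p (vscale (k p) (col sg j))) - 2 * s
         + phi (vadd p (vscale (k p) (col sg j)))) / (k p ^ 2)))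
  + f p * root_d d (det B).

Definition Hnode {d} (f g : vec d -> R) (F : mat d -> vec d -> Prop) (M : mesh d)
    (k : vec d -> R) (s : R) (phi : vec d -> R) (p : vec d) : R :=
  if excluded_middle_informative (Om_h M p) then
    Rsup (fun v => exists B sg lam, S1 B /\ F sg lam /\ ctrl_prod sg lam = B /\
                     v = Lint f k s phi p B sg lam)
  else s - g p.

(* piecewise linear interpolation of nodal values (only meaningful on Om_bar_h) *)
Definition interp {d} (M : mesh d) (u : vec d -> R) (y : vec d) : R :=
  epsilon (inhabits 0) (fun w => exists T mu, List.In T M /\ bary T y mu /\
      w = \big[Rplus/0]_(i < d.+1) (mu i * u (T i))).

Definition Hh {d} f g F (M : mesh d) k s phi : vec d -> R :=
  interp M (Hnode f g F M k s phi).

Definition Sscheme {d} f g F (M : mesh d) k (y : vec d) (s : R) (phi : vec d -> R) : R :=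
  hmax M * Hh f g F M k s phi y.

(* Main.v *)
Require Import Defs.
From HB Require Import structures.
From mathcomp Require Import all_boot all_fingroup.
From Stdlib Require Import Reals ClassicalEpsilon Lra FunctionalExtensionality ZArith Lia.
Open Scope R_scope.
Set Implicit Arguments.
Unset Strict Implicit.

Lemma Rplus_assoc' : associative Rplus. Proof. move=> a b c; ring. Qed.
Lemma Rplus_comm' : commutative Rplus. Proof. move=> a b; ring. Qed.
Lemma Rplus_0l' : left_id 0 Rplus. Proof. move=> a; ring. Qed.
Lemma Rmult_assoc' : associative Rmult. Proof. move=> a b c; ring. Qed.
Lemma Rmult_comm' : commutative Rmult. Proof. move=> a b; ring. Qed.
Lemma Rmult_1l' : left_id 1 Rmult. Proof. move=> a; ring. Qed.
Lemma Rmult_0l' : left_zero 0 Rmult. Proof. move=> a; ring. Qed.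
Lemma Rmult_0r' : right_zero 0 Rmult. Proof. move=> a; ring. Qed.
Lemma Rdl' : left_distributive Rmult Rplus. Proof. move=> a b c; ring. Qed.
Lemma Rdr' : right_distributive Rmult Rplus. Proof. move=> a b c; ring. Qed.

HB.instance Definition _ := Monoid.isComLaw.Build R 0 Rplus Rplus_assoc' Rplus_comm' Rplus_0l'.
HB.instance Definition _ := Monoid.isComLaw.Build R 1 Rmult Rmult_assoc' Rmult_comm' Rmult_1l'.
HB.instance Definition _ := Monoid.isMulLaw.Build R 0 Rmult Rmult_0l' Rmult_0r'.
HB.instance Definition _ := Monoid.isAddLaw.Build R Rmult Rplus Rdl' Rdr'.


Section Sums.
Variable d : nat.
Implicit Types F G : 'I_d -> R.

Lemma sumR_ext F G : (forall i, F i = G i) -> sumR F = sumR G.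
Proof. by move=> H; apply: eq_bigr => i _. Qed.

Lemma sumR_to G F : (forall i, F i = G i) -> sumR F = sumR G.
Proof. exact: sumR_ext. Qed.

Lemma sumR_le F G : (forall i, F i <= G i) -> sumR F <= sumR G.
Proof.
move=> H; rewrite /sumR; apply: (big_ind2 (fun a b => a <= b)); first lra.
  by move=> ? ? ? ? ? ?; lra.
by move=> i _; apply: H.
Qed.

Lemma sumR_ge0 F : (forall i, 0 <= F i) -> 0 <= sumR F.
Proof.
move=> H; rewrite /sumR; apply: (big_ind (fun a => 0 <= a)); first lra.
  by move=> ? ? ? ?; lra.
by move=> i _; apply: H.
Qed.

Lemma sumR_abs F : Rabs (sumR F) <= sumR (fun i => Rabs (F i)).
Proof.
rewrite /sumR; apply: (big_ind2 (fun a b => Rabs a <= b)).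
  by rewrite Rabs_R0; lra.
  by move=> a b c e H1 H2; apply: Rle_trans (Rabs_triang _ _) _; lra.
by move=> i _; lra.
Qed.

Lemma sumR_split F G : sumR (fun i => F i + G i) = sumR F + sumR G.
Proof. by rewrite /sumR big_split. Qed.

Lemma sumR_scal F c : sumR (fun i => c * F i) = c * sumR F.
Proof. by rewrite /sumR big_distrr. Qed.

Lemma sumR_scalr F c : sumR (fun i => F i * c) = sumR F * c.
Proof. by rewrite /sumR big_distrl. Qed.

Lemma sumR_opp F : sumR (fun i => - F i) = - sumR F.
Proof.
have -> : - sumR F = (-1) * sumR F by ring.
rewrite -sumR_scal; apply: sumR_ext => i; ring.
Qed.

Lemma sumR_minus F G : sumR (fun i => F i - G i) = sumR F - sumR G.
Proof. rewrite /Rminus -sumR_opp -sumR_split. by apply: sumR_ext. Qed.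

Lemma sumR_term F i0 : (forall i, 0 <= F i) -> F i0 <= sumR F.
Proof.
move=> H; rewrite /sumR (bigD1 i0) //=.
match goal with |- _ <= _ + ?X => have : 0 <= X end.
  apply: (big_ind (fun a => 0 <= a)); first lra.
    by move=> ? ? ? ?; lra.
  by move=> i _; apply: H.
lra.
Qed.

Lemma sumR_const c : sumR (fun _ : 'I_d => c) = INR d * c.
Proof.
rewrite /sumR big_const_ord.
elim: d => [|n IH]; first by simpl; ring.
rewrite iterS IH S_INR; ring.
Qed.

Lemma sumR_delta (j : 'I_d) (a : 'I_d -> R) :
  sumR (fun i => if i == j then a i else 0) = a j.
Proof.
rewrite /sumR (bigD1 j) //= eqxx big1 ?Rplus_0_r //.
by move=> i /negbTE ->.
Qed.

Lemma sumR_swap (A : 'I_d -> 'I_d -> R) :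
  sumR (fun i => sumR (fun j => A i j)) = sumR (fun j => sumR (fun i => A i j)).
Proof. by rewrite /sumR exchange_big. Qed.

End Sums.
Arguments sumR_to {d} G {F}.

Lemma sq_abs x : x * x = Rabs x * Rabs x.
Proof. by rewrite -Rabs_mult Rabs_pos_eq //; apply: Rle_0_sqr. Qed.

Lemma sq_le x y : Rabs x <= y -> x * x <= y * y.
Proof. move=> H; rewrite sq_abs; have := Rabs_pos x; nra. Qed.

Section Vec.
Variable d : nat.
Implicit Types v w : vec d.

Lemma vnorm_ge0 v : 0 <= vnorm v.
Proof. apply: sqrt_pos. Qed.

Lemma sumsq_ge0 v : 0 <= sumR (fun i => v i * v i).
Proof. apply: sumR_ge0 => i; apply: Rle_0_sqr. Qed.

Lemma vnorm_coord v i : Rabs (v i) <= vnorm v.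
Proof.
rewrite /vnorm -(sqrt_Rsqr_abs (v i)); apply: sqrt_le_1_alt.
rewrite /Rsqr. by apply: (@sumR_term d (fun i => v i * v i) i) => j; apply: Rle_0_sqr.
Qed.

Lemma vnorm_mono v w : (forall i, Rabs (v i) <= Rabs (w i)) -> vnorm v <= vnorm w.
Proof.
move=> H; apply: sqrt_le_1_alt; apply: sumR_le => i.
rewrite (sq_abs (w i)); apply: sq_le; apply: H.
Qed.

Lemma vnorm_bound v a : 0 <= a -> (forall i, Rabs (v i) <= a) -> vnorm v <= INR d * a.
Proof.
move=> Ha H.
have H1 : vnorm v <= sqrt (INR d * (a * a)).
  apply: sqrt_le_1_alt. rewrite -sumR_const. apply: sumR_le => i.
  by apply: sq_le; apply: H.
apply: Rle_trans H1 _.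
have Hd : 0 <= INR d by apply: pos_INR.
rewrite -(sqrt_square (INR d * a)); last by apply: Rmult_le_pos.
apply: sqrt_le_1_alt.
have : INR d <= INR d * INR d.
  case: d => [|n]; first (simpl; lra).
  rewrite -{1}(Rmult_1_r (INR n.+1)); apply: Rmult_le_compat_l;
    [apply: pos_INR | rewrite S_INR; have := pos_INR n; lra].
move=> ?; have := Rle_0_sqr a; nra.
Qed.

Lemma vnorm_scale a v : vnorm (vscale a v) = Rabs a * vnorm v.
Proof.
rewrite /vnorm /vscale.
rewrite (sumR_to (fun i => (a * a) * (v i * v i))); last by move=> i; ring.
rewrite sumR_scal sqrt_mult; last exact: sumsq_ge0.
  by rewrite -(sqrt_Rsqr_abs a).
apply: Rle_0_sqr.
Qed.

Lemma vnorm_zero v : (forall i, v i = 0) -> vnorm v = 0.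
Proof.
move=> H; rewrite /vnorm (sumR_to (fun _ => 0)); last by move=> i; rewrite H; ring.
by rewrite sumR_const Rmult_0_r sqrt_0.
Qed.

Lemma vdist_refl v : vdist v v = 0.
Proof. by apply: vnorm_zero => i; rewrite /vsub; ring. Qed.

Lemma l1_le v : sumR (fun i => Rabs (v i)) <= INR d * vnorm v.
Proof. rewrite -sumR_const; apply: sumR_le => i; apply: vnorm_coord. Qed.

Lemma vdist_sym v w : vdist v w = vdist w v.
Proof.
rewrite /vdist /vnorm; f_equal; apply: sumR_ext => i; rewrite /vsub; ring.
Qed.

End Vec.

Lemma der_ext f g x l : derivable_pt_lim f x l -> (forall t, f t = g t) -> derivable_pt_lim g x l.
Proof. move=> H E; have -> : g = f by apply: functional_extensionality => t; rewrite E. done. Qed.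

Lemma der_shift f g t0 l : (forall s, g s = f (t0 + s)) -> derivable_pt_lim g 0 l ->
  derivable_pt_lim f t0 l.
Proof.
move=> E H eps Heps; case: (H eps Heps) => del Hd; exists del => h h0 hd.
have := Hd h h0 hd; rewrite !E Rplus_0_l Rplus_0_r; done.
Qed.

Lemma der_plus f1 f2 x l1 l2 : derivable_pt_lim f1 x l1 -> derivable_pt_lim f2 x l2 ->
  derivable_pt_lim (fun t => f1 t + f2 t) x (l1 + l2).
Proof. move=> H1 H2; exact: (derivable_pt_lim_plus _ _ _ _ _ H1 H2). Qed.

Lemma der_minus f1 f2 x l1 l2 : derivable_pt_lim f1 x l1 -> derivable_pt_lim f2 x l2 ->
  derivable_pt_lim (fun t => f1 t - f2 t) x (l1 - l2).
Proof. move=> H1 H2; exact: (derivable_pt_lim_minus _ _ _ _ _ H1 H2). Qed.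

Lemma der_lin c x : derivable_pt_lim (fun t => c * t) x c.
Proof.
have := derivable_pt_lim_scal id c x 1 (derivable_pt_lim_id x).
rewrite Rmult_1_r => H; apply: (der_ext H) => t; done.
Qed.

Lemma der_const c x : derivable_pt_lim (fun _ => c) x 0.
Proof. exact: derivable_pt_lim_const. Qed.

Lemma der_sq c x : derivable_pt_lim (fun t => t * t * c) x (2 * x * c).
Proof.
have H := derivable_pt_lim_mult id id x 1 1 (derivable_pt_lim_id x) (derivable_pt_lim_id x).
have H2 := derivable_pt_lim_scal _ c x _ H.
have -> : 2 * x * c = c * (1 * id x + id x * 1) by rewrite /id; ring.
apply: (der_ext H2) => t; rewrite /mult_real_fct /mult_fct /id; ring.
Qed.

Lemma lipschitz e e' a b M : a <= b ->
  (forall c, a <= c <= b -> derivable_pt_lim e c (e' c)) ->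
  (forall c, a <= c <= b -> Rabs (e' c) <= M) -> Rabs (e b - e a) <= M * (b - a).
Proof.
move=> Hab Hd HM; case: (Rle_lt_or_eq_dec _ _ Hab) => Hlt; last first.
  subst; rewrite Rminus_diag Rabs_R0; lra.
case: (MVT_cor2 e e' a b Hlt Hd) => c [-> Hc].
rewrite Rabs_mult (Rabs_right (b - a)); last lra.
apply: Rmult_le_compat_r; first lra.
apply: HM; lra.
Qed.

Lemma lipschitz2 e e' a b M :
  (forall c, Rmin a b <= c <= Rmax a b -> derivable_pt_lim e c (e' c)) ->
  (forall c, Rmin a b <= c <= Rmax a b -> Rabs (e' c) <= M) -> Rabs (e b - e a) <= M * Rabs (b - a).
Proof.
move=> Hd HM; case: (Rle_dec a b) => Hab.
  have E1 : Rmin a b = a by apply: Rmin_left.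
  have E2 : Rmax a b = b by apply: Rmax_right.
  rewrite E1 E2 in Hd HM.
  rewrite (Rabs_right (b - a)); last lra.
  exact: (lipschitz Hab Hd HM).
move/Rnot_le_lt: Hab => Hab.
have E1 : Rmin a b = b by apply: Rmin_right; lra.
have E2 : Rmax a b = a by apply: Rmax_left; lra.
rewrite E1 E2 in Hd HM.
rewrite Rabs_minus_sym (Rabs_minus_sym b) (Rabs_right (a - b)); last lra.
apply: (lipschitz (e' := e')) => //; lra.
Qed.

Lemma der_local_unique f g l l' r : 0 < r -> (forall t, Rabs t < r -> f t = g t) ->
  derivable_pt_lim f 0 l -> derivable_pt_lim g 0 l' -> l = l'.
Proof.
move=> Hr E Hf Hg; apply: (uniqueness_limite g 0) => //.
move=> eps Heps; case: (Hf eps Heps) => del Hd.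
have Hm : 0 < Rmin del r by apply: Rmin_pos => //; apply: cond_pos.
exists (mkposreal _ Hm) => h h0 /= hd.
rewrite -!E; first (apply: Hd => //; apply: Rlt_le_trans hd (Rmin_l _ _)).
- rewrite Rabs_R0; lra.
- rewrite Rplus_0_l; apply: Rlt_le_trans hd (Rmin_r _ _).
Qed.

Lemma finmin (I : eqType) (P : I -> R -> Prop) (l : seq I) :
  (forall j a b, 0 < a <= b -> P j b -> P j a) ->
  (forall j, exists del, 0 < del /\ P j del) ->
  exists del, 0 < del /\ forall j, j \in l -> P j del.
Proof.
move=> Hm H; elim: l => [|a l [del [Hd IH]]].
  by exists 1; split; [lra | move=> j].
case: (H a) => da [Hda Pa].
exists (Rmin da del); split; first by apply: Rmin_pos.
move=> j; rewrite in_cons => /orP [/eqP -> | Hj].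
  apply: (Hm _ _ da) => //; split; [exact: Rmin_pos | exact: Rmin_l].
apply: (Hm _ _ del); last exact: IH.
split; [exact: Rmin_pos | exact: Rmin_r].
Qed.

Lemma finmin_ord d (P : 'I_d -> R -> Prop) :
  (forall j a b, 0 < a <= b -> P j b -> P j a) ->
  (forall j, exists del, 0 < del /\ P j del) ->
  exists del, 0 < del /\ forall j, P j del.
Proof.
move=> Hm H; case: (finmin (enum 'I_d) Hm H) => del [Hd H'].
exists del; split => // j; apply: H'; by rewrite mem_enum.
Qed.

Lemma absle_minmax a c : Rmin 0 a <= c <= Rmax 0 a -> Rabs c <= Rabs a.
Proof. unfold Rmin, Rmax; destruct (Rle_dec 0 a); split_Rabs; lra. Qed.

Lemma div_bound X h a eps : h <> 0 -> Rabs X <= a * Rabs h -> a < eps -> Rabs (X / h) < eps.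
Proof.
move=> h0 H Ha; have Hh : 0 < Rabs h by apply: Rabs_pos_lt.
rewrite /Rdiv Rabs_mult Rabs_inv.
apply: Rle_lt_trans Ha.
apply: (Rmult_le_reg_r (Rabs h)) => //.
rewrite Rmult_assoc Rinv_l; last lra. lra.
Qed.

Section Diff.
Variable d : nat.

Lemma ord_split (i : 'I_d) (m : nat) (Hm : (leq m.+1 d)) :
  ((leq i.+1 m.+1) = (leq i.+1 m) || (i == Ordinal Hm)) /\ ((leq i.+1 m) -> (i == Ordinal Hm) = false).
Proof.
have E : (i == Ordinal Hm) = (val i == m) by [].
rewrite E ltnS leq_eqVlt orbC; split => //.
by move=> H; apply/eqP => E'; rewrite E' ltnn in H.
Qed.

Lemma has_partial_shift (u : vec d -> R) q i t l :
  has_partial u (vadd q (vscale t (basis i))) i l ->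
  derivable_pt_lim (fun s => u (vadd q (vscale s (basis i)))) t l.
Proof.
move=> H; apply: (der_shift (g := fun s => u (vadd (vadd q (vscale t (basis i))) (vscale s (basis i))))) => //.
move=> s; f_equal; apply: functional_extensionality => c; rewrite /vadd /vscale; ring.
Qed.

Lemma frechet (U : vec d -> Prop) (u : vec d -> R) (Du : 'I_d -> vec d -> R) p r :
  0 < r -> (forall z, vdist z p < r -> U z) ->
  (forall j y, U y -> has_partial u y j (Du j y)) ->
  (forall j eps, 0 < eps -> exists del, 0 < del /\ forall z, vdist z p < del -> Rabs (Du j z - Du j p) < eps) ->
  forall eps, 0 < eps -> exists del, 0 < del /\ forall h, vnorm h < del ->
    Rabs (u (vadd p h) - u p - sumR (fun j => h j * Du j p)) <= eps * vnorm h.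
Proof.
move=> Hr Hball Hpar Hcont eps Heps.
have Hd1 : 0 < INR d + 1 by have := pos_INR d; lra.
set e1 := eps / (INR d + 1).
have He1 : 0 < e1 by apply: Rdiv_lt_0_compat.
case: (@finmin_ord d (fun j del => forall z, vdist z p < del -> Rabs (Du j z - Du j p) < e1)).
- move=> j a b Hab H z Hz; apply: H; lra.
- move=> j; exact: Hcont.
move=> dc [Hdc Hc].
exists (Rmin r dc); split; first exact: Rmin_pos.
move=> h Hh.
have Hhr : vnorm h < r by apply: Rlt_le_trans Hh (Rmin_l _ _).
have Hhc : vnorm h < dc by apply: Rlt_le_trans Hh (Rmin_r _ _).
pose q m := fun i : 'I_d => p i + (if (leq i.+1 m) then h i else 0).
have key : forall m, (leq m d) -> Rabs (u (q m) - u p - sumR (fun j : 'I_d => if (leq j.+1 m) then h j * Du j p else 0)) <= INR m * e1 * vnorm h.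
  elim=> [|m IH] Hm.
    have -> : q O = p by apply: functional_extensionality => i; rewrite /q ltn0 Rplus_0_r.
    rewrite (sumR_to (fun _ => 0)); last by move=> i; rewrite ltn0.
    rewrite sumR_const; replace (u p - u p - INR d * 0) with 0 by ring.
    rewrite Rabs_R0 /=; lra.
  have Hmd : (leq m.+1 d) by [].
  set i0 := Ordinal Hmd.
  pose pt t := vadd (q m) (vscale t (basis i0)).
  have Eq : q m.+1 = pt (h i0).
    apply: functional_extensionality => i; rewrite /pt /q /vadd /vscale /basis.
    case: (ord_split i Hmd) => -> Hx.
    case Him: (leq i.+1 m); first by rewrite (Hx Him) /=; ring.
    rewrite /=; case Hi: (i == i0); last ring.
    by move/eqP: Hi => ->; ring.
  have Eq0 : pt 0 = q m.
    apply: functional_extensionality => i; rewrite /pt /vadd /vscale; ring.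
  have Es : sumR (fun j : 'I_d => if (leq j.+1 m.+1) then h j * Du j p else 0) =
            sumR (fun j : 'I_d => if (leq j.+1 m) then h j * Du j p else 0) + h i0 * Du i0 p.
    rewrite -(sumR_delta i0 (fun j => h j * Du j p)) -sumR_split; apply: sumR_ext => i.
    case: (ord_split i Hmd) => -> Hx.
    case Him: (leq i.+1 m); first by rewrite (Hx Him) /=; ring.
    rewrite /=; case: (i == i0); ring.
  have Hdist : forall c, Rmin 0 (h i0) <= c <= Rmax 0 (h i0) -> vdist (pt c) p <= vnorm h.
    move=> c Hc'; have Hc2 := absle_minmax Hc'.
    apply: vnorm_mono => i; rewrite /vsub /pt /q /vadd /vscale /basis.
    case Him: (leq i.+1 m).
      have := (ord_split i Hmd).2 Him; rewrite /i0 => ->.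
      replace (p i + h i + c * 0 - p i) with (h i) by ring; lra.
    case Hi: (i == i0).
      move/eqP: Hi => ->; replace (p i0 + 0 + c * 1 - p i0) with c by ring; done.
    replace (p i + 0 + c * 0 - p i) with 0 by ring; rewrite Rabs_R0; apply: Rabs_pos.
  have Hlip := @lipschitz2 (fun t => u (pt t) - Du i0 p * t) (fun t => Du i0 (pt t) - Du i0 p) 0 (h i0) e1.
  have Hl : Rabs ((u (pt (h i0)) - Du i0 p * h i0) - (u (pt 0) - Du i0 p * 0)) <= e1 * Rabs (h i0 - 0).
    apply: Hlip.
      move=> c Hc'; apply: der_minus; last exact: der_lin.
      apply: has_partial_shift; apply: Hpar; apply: Hball.
      exact: Rle_lt_trans (Hdist c Hc') Hhr.
    move=> c Hc'; apply: Rlt_le; apply: Hc; exact: Rle_lt_trans (Hdist c Hc') Hhc.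
  rewrite Eq Es.
  have -> : u (pt (h i0)) - u p - (sumR (fun j : 'I_d => if (leq j.+1 m) then h j * Du j p else 0) + h i0 * Du i0 p)
     = (u (q m) - u p - sumR (fun j : 'I_d => if (leq j.+1 m) then h j * Du j p else 0)) +
       ((u (pt (h i0)) - Du i0 p * h i0) - (u (pt 0) - Du i0 p * 0)) by rewrite Eq0; ring.
  apply: Rle_trans (Rabs_triang _ _) _.
  have := IH (ltnW Hm); rewrite Rminus_0_r in Hl.
  have := vnorm_coord h i0.
  rewrite S_INR; nra.
have := key d (leqnn d).
have -> : q d = vadd p h.
  apply: functional_extensionality => i; by rewrite /q /vadd ltn_ord.
rewrite (sumR_to (fun j => h j * Du j p)); last by move=> i; rewrite ltn_ord.
move=> H; apply: Rle_trans H _.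
apply: Rmult_le_compat_r; first exact: vnorm_ge0.
have : e1 * (INR d + 1) = eps by rewrite /e1; field; lra.
nra.
Qed.

Lemma chain (U : vec d -> Prop) (u : vec d -> R) (Du : 'I_d -> vec d -> R) :
  is_open U -> (forall j y, U y -> has_partial u y j (Du j y)) -> (forall j, cont_on U (Du j)) ->
  forall y v t0, U (vadd y (vscale t0 v)) ->
  derivable_pt_lim (fun t => u (vadd y (vscale t v))) t0
     (sumR (fun j => v j * Du j (vadd y (vscale t0 v)))).
Proof.
move=> HU Hpar Hcont y v t0 Hp.
set p := vadd y (vscale t0 v).
case: (HU p Hp) => r [Hr Hball].
have Hc : forall j eps, 0 < eps -> exists del, 0 < del /\ forall z, vdist z p < del -> Rabs (Du j z - Du j p) < eps.
  move=> j eps Heps; case: (Hcont j p Hp eps Heps) => del [Hdel Hz].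
  exists (Rmin del r); split; first exact: Rmin_pos.
  move=> z Hzp; apply: Hz.
    apply: Hball; apply: Rlt_le_trans Hzp (Rmin_r _ _).
  apply: Rlt_le_trans Hzp (Rmin_l _ _).
move=> eps Heps.
have HN : 0 < vnorm v + 1 by have := vnorm_ge0 v; lra.
have He2 : 0 < eps / 2 / (vnorm v + 1) by apply: Rdiv_lt_0_compat; lra.
case: (frechet Hr Hball Hpar Hc He2) => del1 [Hdel1 Hf].
have Hdp : 0 < del1 / (vnorm v + 1) by apply: Rdiv_lt_0_compat.
exists (mkposreal _ Hdp) => h h0 /= hd.
have E : vadd y (vscale (t0 + h) v) = vadd p (vscale h v).
  apply: functional_extensionality => i; rewrite /p /vadd /vscale; ring.
rewrite E.
have Hn : vnorm (vscale h v) < del1.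
  rewrite vnorm_scale.
  have : Rabs h * (vnorm v + 1) < del1.
    have := Rmult_lt_compat_r (vnorm v + 1) _ _ HN hd.
    by rewrite /Rdiv Rmult_assoc Rinv_l ?Rmult_1_r; lra.
  have := vnorm_ge0 v; have := Rabs_pos h; nra.
have := Hf _ Hn.
rewrite (sumR_to (fun j => h * (v j * Du j p))); last by move=> j; rewrite /vscale; ring.
rewrite sumR_scal => Hb.
have -> : (u (vadd p (vscale h v)) - u p) / h - sumR (fun j => v j * Du j p) =
          (u (vadd p (vscale h v)) - u p - h * sumR (fun j => v j * Du j p)) / h by field.
apply: (div_bound (a := eps / 2 / (vnorm v + 1) * vnorm v)) => //.
  by rewrite vnorm_scale in Hb; lra.
have : eps / 2 / (vnorm v + 1) * vnorm v < eps / 2 / (vnorm v + 1) * (vnorm v + 1).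
  apply: Rmult_lt_compat_l => //; lra.
have -> : eps / 2 / (vnorm v + 1) * (vnorm v + 1) = eps / 2 by field; lra.
lra.
Qed.

End Diff.

Lemma sumR_abs_bound d (a b : 'I_d -> R) B : (forall j, Rabs (b j) <= B) ->
  Rabs (sumR (fun j => a j * b j)) <= sumR (fun j => Rabs (a j)) * B.
Proof.
move=> H; apply: Rle_trans (sumR_abs _) _; rewrite -sumR_scalr; apply: sumR_le => j.
rewrite Rabs_mult; apply: Rmult_le_compat_l; [apply: Rabs_pos | apply: H].
Qed.

Section Taylor.
Variable d : nat.
Variable Om : vec d -> Prop.
Variable phi : vec d -> R.
Variable Dphi : 'I_d -> vec d -> R.
Variable D2 : 'I_d -> 'I_d -> vec d -> R.
Hypothesis Hopen : is_open Om.
Hypothesis Hp1 : forall j y, Om y -> has_partial phi y j (Dphi j y).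
Hypothesis Hc1 : forall j, cont_on Om (Dphi j).
Hypothesis Hp2 : forall j i y, Om y -> has_partial (Dphi j) y i (D2 j i y).
Hypothesis Hc2 : forall j i, cont_on Om (D2 j i).

Definition vopp (v : vec d) : vec d := fun i => - v i.

Lemma vopp_scale (z v : vec d) t : vadd z (vscale t (vopp v)) = vadd z (vscale (- t) v).
Proof. apply: functional_extensionality => i; rewrite /vadd /vscale /vopp; ring. Qed.

Lemma vscale0 (z v : vec d) : vadd z (vscale 0 v) = z.
Proof. apply: functional_extensionality => i; rewrite /vadd /vscale; ring. Qed.

Lemma vscale1 (z v : vec d) : vadd z (vscale 1 v) = vadd z v.
Proof. apply: functional_extensionality => i; rewrite /vadd /vscale; ring. Qed.

Lemma second_diff z (sg : vec d) kk eta (P : 'I_d -> R) :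
  0 < kk -> 0 <= eta -> (forall t, -kk <= t <= kk -> Om (vadd z (vscale t sg))) ->
  (forall j t, -kk <= t <= kk ->
     Rabs (sumR (fun i => sg i * D2 j i (vadd z (vscale t sg))) - P j) <= eta) ->
  Rabs (phi (vadd z (vscale kk sg)) + phi (vadd z (vscale (- kk) sg)) - 2 * phi z
        - kk * kk * sumR (fun j => sg j * P j))
   <= 2 * sumR (fun j => Rabs (sg j)) * eta * (kk * kk).
Proof.
move=> Hk Heta0 HOm Heta.
set q := sumR (fun j => sg j * P j).
set S := sumR (fun j => Rabs (sg j)).
have HS : 0 <= S by apply: sumR_ge0 => j; apply: Rabs_pos.
have step1 : forall t, 0 <= t <= kk -> forall j,
   Rabs (Dphi j (vadd z (vscale t sg)) - Dphi j (vadd z (vscale (- t) sg)) - 2 * t * P j) <= eta * (2 * t).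
  move=> t Ht j.
  have H := @lipschitz (fun s => Dphi j (vadd z (vscale s sg)) - P j * s)
    (fun s => sumR (fun i => sg i * D2 j i (vadd z (vscale s sg))) - P j) (- t) t eta.
  have E : Dphi j (vadd z (vscale t sg)) - Dphi j (vadd z (vscale (- t) sg)) - 2 * t * P j =
    (Dphi j (vadd z (vscale t sg)) - P j * t) - (Dphi j (vadd z (vscale (- t) sg)) - P j * (- t)) by ring.
  rewrite E; replace (2 * t) with (t - - t) by ring; apply: H; first lra.
    move=> c Hc; apply: der_minus; last exact: der_lin.
    apply: (chain Hopen (Hp2 j) (Hc2 j)); apply: HOm; lra.
  move=> c Hc; apply: Heta; lra.
pose E t := phi (vadd z (vscale t sg)) + phi (vadd z (vscale t (vopp sg))) - 2 * phi z - t * t * q.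
pose E' t := sumR (fun j => sg j * Dphi j (vadd z (vscale t sg))) +
             sumR (fun j => vopp sg j * Dphi j (vadd z (vscale t (vopp sg)))) - 0 - 2 * t * q.
have H := @lipschitz E E' 0 kk (2 * S * eta * kk).
have E0 : E 0 = 0 by rewrite /E !vscale0; ring.
have Ek : E kk = phi (vadd z (vscale kk sg)) + phi (vadd z (vscale (- kk) sg)) - 2 * phi z - kk * kk * q.
  by rewrite /E vopp_scale.
rewrite -Ek; replace (E kk) with (E kk - E 0) by (rewrite E0; ring).
replace (2 * S * eta * (kk * kk)) with (2 * S * eta * kk * (kk - 0)) by ring.
apply: H; first lra.
  move=> c Hc; apply: der_minus.
    apply: der_minus; last exact: der_const.
    apply: der_plus; apply: (chain Hopen Hp1 Hc1).
      apply: HOm; lra.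
    rewrite vopp_scale; apply: HOm; lra.
  exact: der_sq.
move=> c Hc.
have -> : E' c = sumR (fun j => sg j * (Dphi j (vadd z (vscale c sg)) - Dphi j (vadd z (vscale (- c) sg)) - 2 * c * P j)).
  rewrite /E' /q vopp_scale.
  have -> : 2 * c * sumR (fun j => sg j * P j) = sumR (fun j => sg j * (2 * c * P j)).
    rewrite -sumR_scal; apply: sumR_ext => j; ring.
  rewrite (@sumR_ext _ (fun j => vopp sg j * Dphi j (vadd z (vscale (- c) sg)))
                       (fun j => - (sg j * Dphi j (vadd z (vscale (- c) sg))))); last by move=> j; rewrite /vopp; ring.
  rewrite sumR_opp; symmetry.
  rewrite (sumR_to (fun j => (sg j * Dphi j (vadd z (vscale c sg)) - sg j * Dphi j (vadd z (vscale (- c) sg))) - sg j * (2 * c * P j)));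
    last by move=> j; ring.
  rewrite !sumR_minus; ring.
apply: Rle_trans (sumR_abs_bound _ (fun j => step1 c Hc j)) _.
rewrite -/S; have : eta * (2 * c) <= eta * (2 * kk) by apply: Rmult_le_compat_l; lra.
nra.
Qed.

Lemma interp_err y (w : vec d) M : 0 <= M ->
  (forall t, 0 <= t <= 1 -> Om (vadd y (vscale t w))) ->
  (forall j i t, 0 <= t <= 1 -> Rabs (D2 j i (vadd y (vscale t w))) <= M) ->
  Rabs (phi (vadd y w) - phi y - sumR (fun j => w j * Dphi j y))
   <= M * (sumR (fun i => Rabs (w i)) * sumR (fun i => Rabs (w i))).
Proof.
move=> HM0' HOm HM.
set Sw := sumR (fun i => Rabs (w i)).
have HS : 0 <= Sw by apply: sumR_ge0 => j; apply: Rabs_pos.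
have HM0 : forall t, 0 <= t <= 1 -> forall j, Rabs (Dphi j (vadd y (vscale t w)) - Dphi j y) <= Sw * M * t.
  move=> t Ht j.
  have H := @lipschitz (fun s => Dphi j (vadd y (vscale s w)))
    (fun s => sumR (fun i => w i * D2 j i (vadd y (vscale s w)))) 0 t (Sw * M).
  rewrite -{2}(vscale0 y w); replace t with (t - 0) at 2 by ring; apply: H; first lra.
    move=> c Hc; apply: (chain Hopen (Hp2 j) (Hc2 j)); apply: HOm; lra.
  move=> c Hc; apply: sumR_abs_bound => i; apply: HM; lra.
set c0 := sumR (fun j => w j * Dphi j y).
pose E t := phi (vadd y (vscale t w)) - c0 * t.
pose E' t := sumR (fun j => w j * Dphi j (vadd y (vscale t w))) - c0.
have H := @lipschitz E E' 0 1 (Sw * (Sw * M * 1)).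
have -> : phi (vadd y w) - phi y - c0 = E 1 - E 0 by rewrite /E vscale1 vscale0; ring.
replace (M * (Sw * Sw)) with (Sw * (Sw * M * 1) * (1 - 0)) by ring.
apply: H; first lra.
  move=> c Hc; apply: der_minus; last exact: der_lin.
  apply: (chain Hopen Hp1 Hc1); apply: HOm; lra.
move=> c Hc.
have -> : E' c = sumR (fun j => w j * (Dphi j (vadd y (vscale c w)) - Dphi j y)).
  by rewrite /E' /c0 -sumR_minus; apply: sumR_ext => j; ring.
apply: sumR_abs_bound => j; apply: Rle_trans (HM0 c Hc j) _.
have : 0 <= Sw * M by apply: Rmult_le_pos.
nra.
Qed.
End Taylor.

Lemma Rsup_lub (P : R -> Prop) : (exists v, P v) -> (exists M, forall v, P v -> v <= M) ->
  is_lub P (Rsup P).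
Proof.
move=> [v Hv] [M HM].
have Hb : bound P by exists M => w Hw; apply: HM.
case: (completeness P Hb (ex_intro _ v Hv)) => s Hs.
rewrite /Rsup; apply: epsilon_spec; by exists s.
Qed.

Lemma lub_le (P : R -> Prop) s c : is_lub P s -> (forall v, P v -> v <= c) -> s <= c.
Proof. move=> [_ H] Hc; apply: H => v Hv; exact: Hc. Qed.

Lemma le_lub (P : R -> Prop) s v : is_lub P s -> P v -> v <= s.
Proof. move=> [H _] Hv; exact: H. Qed.

Lemma sup_close (d : nat) (F : mat d -> vec d -> Prop) (L : mat d -> mat d -> vec d -> R)
   (T : mat d -> R) a Err :
  (exists B : mat d, S1 B) ->
  (forall B, S1 B -> exists sg lam, F sg lam /\ ctrl_prod sg lam = B) ->
  (exists M, forall B, S1 B -> T B <= M) ->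
  (forall B sg lam, S1 B -> F sg lam -> ctrl_prod sg lam = B -> Rabs (L B sg lam - (T B + a)) <= Err) ->
  Rabs (Rsup (fun v => exists B sg lam, S1 B /\ F sg lam /\ ctrl_prod sg lam = B /\ v = L B sg lam)
        - (Rsup (fun v => exists B, S1 B /\ v = T B) + a)) <= Err.
Proof.
move=> [B0 HB0] Hsurj [M HM] Hclose.
set P2 := fun v => exists B, S1 B /\ v = T B.
set P1 := fun v => exists B sg lam, S1 B /\ F sg lam /\ ctrl_prod sg lam = B /\ v = L B sg lam.
have H2 : is_lub P2 (Rsup P2).
  apply: Rsup_lub; first by exists (T B0), B0.
  by exists M => v [B [HB ->]]; apply: HM.
have H1 : is_lub P1 (Rsup P1).
  apply: Rsup_lub.
    case: (Hsurj B0 HB0) => sg [lam [Hf Hc]].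
    by exists (L B0 sg lam), B0, sg, lam.
  exists (M + a + Err) => v [B [sg [lam [HB [Hf [Hc ->]]]]]].
  have := Hclose B sg lam HB Hf Hc; have := HM B HB; split_Rabs; lra.
have up : Rsup P1 <= Rsup P2 + a + Err.
  apply: (lub_le H1) => v [B [sg [lam [HB [Hf [Hc ->]]]]]].
  have := Hclose B sg lam HB Hf Hc.
  have : T B <= Rsup P2 by apply: (le_lub H2); exists B.
  split_Rabs; lra.
have lo : Rsup P2 <= Rsup P1 - a + Err.
  apply: (lub_le H2) => v [B [HB ->]].
  case: (Hsurj B HB) => sg [lam [Hf Hc]].
  have := Hclose B sg lam HB Hf Hc.
  have : L B sg lam <= Rsup P1 by apply: (le_lub H1); exists B, sg, lam.
  split_Rabs; lra.
split_Rabs; lra.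
Qed.

Lemma bigprod_bound (I : Type) (r : seq I) (G : I -> R) b : 0 <= b -> (forall i, Rabs (G i) <= b) ->
  Rabs (\big[Rmult/1]_(i <- r) G i) <= b ^ size r.
Proof.
move=> Hb H; elim: r => [|a r IH]; first by rewrite big_nil Rabs_R1 /=; lra.
rewrite big_cons Rabs_mult (_ : size (a :: r) = (size r).+1) //=.
apply: Rmult_le_compat => //; apply: Rabs_pos.
Qed.

Lemma bigsum_bound (I : Type) (r : seq I) (G : I -> R) b : (forall i, Rabs (G i) <= b) ->
  Rabs (\big[Rplus/0]_(i <- r) G i) <= INR (size r) * b.
Proof.
move=> H; elim: r => [|a r IH]; first by rewrite big_nil Rabs_R0 /=; lra.
rewrite big_cons (_ : size (a :: r) = (size r).+1) // S_INR.
apply: Rle_trans (Rabs_triang _ _) _; have := H a; lra.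
Qed.

Lemma det_bound d (B : mat d) b : 0 <= b -> (forall i j, Rabs (B i j) <= b) ->
  Rabs (det B) <= INR (size (index_enum {perm 'I_d})) * b ^ (size (index_enum 'I_d)).
Proof.
move=> Hb H; rewrite /det; apply: bigsum_bound => s.
rewrite Rabs_mult; case: (odd_perm s); rewrite ?Rabs_Ropp Rabs_R1 Rmult_1_l;
  apply: bigprod_bound => // i; apply: H.
Qed.

Lemma ln_le' x y : 0 < x -> x <= y -> ln x <= ln y.
Proof.
move=> Hx Hxy; case: (Rle_lt_or_eq_dec _ _ Hxy) => H; last by subst; lra.
left; exact: ln_increasing.
Qed.

Lemma root_d_bound d x : (1 <= d)%coq_nat -> 0 <= root_d d x <= Rmax 1 x.
Proof.
move=> Hd; rewrite /root_d; case: (Rlt_dec 0 x) => Hx; last first.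
  rewrite /=; split; [lra | have := Rmax_l 1 x; lra].
rewrite /= /Rpower; split; first by apply: Rlt_le; apply: exp_pos.
have HdR : 1 <= INR d by apply: (le_INR 1).
have Hi : 0 < / INR d <= 1.
  split; first by apply: Rinv_0_lt_compat; lra.
  rewrite -Rinv_1; apply: Rinv_le_contravar; lra.
case: (Rle_dec x 1) => H1.
  apply: Rle_trans (Rmax_l 1 x).
  rewrite -exp_0.
  have : ln x <= 0 by rewrite -ln_1; apply: ln_le'.
  move=> H; have : / INR d * ln x <= 0 by nra.
  move=> H2; case: (Rle_lt_or_eq_dec _ _ H2) => H3; [left; apply: exp_increasing | right; rewrite H3]; done.
apply: Rle_trans (Rmax_r 1 x).
have : 0 <= ln x by rewrite -ln_1; apply: ln_le'; lra.
move=> H; have : / INR d * ln x <= ln x by nra.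
move=> H2; rewrite -{2}(exp_ln x Hx).
case: (Rle_lt_or_eq_dec _ _ H2) => H3; [left; apply: exp_increasing | right; rewrite H3]; done.
Qed.

Section Geo.
Variable d : nat.

Lemma vnorm_basis (i : 'I_d) : vnorm (basis i) = 1.
Proof.
rewrite /vnorm (sumR_to (fun j => if j == i then 1 else 0)); last first.
  by move=> j; rewrite /basis; case: (j == i); ring.
by rewrite sumR_delta sqrt_1.
Qed.

Lemma vdist_axis (x : vec d) i t : vdist (vadd x (vscale t (basis i))) x = Rabs t.
Proof.
rewrite /vdist (_ : vsub _ _ = vscale t (basis i)); last first.
  by apply: functional_extensionality => c; rewrite /vsub /vadd /vscale; ring.
by rewrite vnorm_scale vnorm_basis Rmult_1_r.
Qed.

Lemma hessian_eq (Om : vec d -> Prop) phi (Du : 'I_d -> vec d -> R) (D2 : 'I_d -> 'I_d -> vec d -> R) x r0 :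
  0 < r0 -> (forall y, vdist y x < r0 -> Om y) ->
  (forall j y, Om y -> has_partial phi y j (Du j y)) ->
  (forall j i y, Om y -> has_partial (Du j) y i (D2 j i y)) ->
  hessian phi x = fun i j => D2 j i x.
Proof.
move=> Hr Hball Hp1 Hp2.
have Hx : Om x by apply: Hball; rewrite vdist_refl.
have ex : exists A : mat d, forall i j, is_second_partial phi x i j (A i j).
  exists (fun i j => D2 j i x) => i j; exists r0; split => //; exists (Du j); split.
    by move=> y Hy; apply: Hp1; apply: Hball.
  exact: Hp2.
have H := epsilon_spec (inhabits (fun _ _ => 0)) _ ex.
rewrite /hessian; apply: functional_extensionality => i; apply: functional_extensionality => j.
case: (H i j) => r [Hr' [g [Hg Hgi]]].
set rr := Rmin r r0.
have Hrr : 0 < rr by apply: Rmin_pos.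
have Heq : forall y, vdist y x < rr -> g y = Du j y.
  move=> y Hy; apply: (uniqueness_limite _ 0).
    apply: Hg; apply: Rlt_le_trans Hy (Rmin_l _ _).
  apply: Hp1; apply: Hball; apply: Rlt_le_trans Hy (Rmin_r _ _).
apply: (der_local_unique Hrr _ Hgi (Hp2 j i x Hx)).
move=> t Ht; apply: Heq; by rewrite vdist_axis.
Qed.

Lemma list_ub (A : Type) (l : list A) (g : A -> R) : exists B, forall a, List.In a l -> g a <= B.
Proof.
elim: l => [|a l [B HB]]; first by exists 0.
exists (Rmax (g a) B) => b /= [<- | Hb]; first exact: Rmax_l.
apply: Rle_trans (Rmax_r _ _); exact: HB.
Qed.

Lemma simplex_coord (T : simplex d) p c : in_simplex T p ->
  Rabs (p c) <= sumR (fun j => Rabs (T j c)).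
Proof.
move=> [mu [Hmu [Hs ->]]].
have Hle : forall j, mu j <= 1.
  move=> j; rewrite -Hs; exact: (@sumR_term d.+1 mu j Hmu).
change (Rabs (sumR (fun i => mu i * T i c)) <= sumR (fun j => Rabs (T j c))).
apply: Rle_trans (sumR_abs _) _; apply: sumR_le => j.
rewrite Rabs_mult Rabs_right; last by apply: Rle_ge.
have := Rabs_pos (T j c); have := Hmu j; have := Hle j; nra.
Qed.

Lemma vertex_in (T : simplex d) i : in_simplex T (T i).
Proof.
exists (fun j => if j == i then 1 else 0); split; [|split].
- by move=> j; case: (j == i); lra.
- exact: (@sumR_delta d.+1 i (fun _ => 1)).
- apply: functional_extensionality => c; symmetry.
  change (@sumR d.+1 (fun j => (if j == i then 1 else 0) * T j c) = T i c).
  rewrite (@sumR_to d.+1 (fun j => if j == i then T j c else 0) (fun j => (if j == i then 1 else 0) * T j c)).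
    by rewrite sumR_delta.
  by move=> j; case: (j == i); ring.
Qed.

Lemma diam_ge (T : simplex d) p q : in_simplex T p -> in_simplex T q -> vdist p q <= diam T.
Proof.
move=> Hp Hq; apply: (le_lub (Rsup_lub _ _)); last by exists p, q.
  by exists (vdist p q), p, q.
exists (INR d * (2 * sumR (fun c => sumR (fun j => Rabs (T j c))))) => v [p' [q' [Hp' [Hq' ->]]]].
apply: vnorm_bound.
  apply: Rmult_le_pos; first lra.
  by apply: sumR_ge0 => c; apply: sumR_ge0 => j; apply: Rabs_pos.
move=> c; rewrite /vsub.
have H1 := simplex_coord c Hp'; have H2 := simplex_coord c Hq'.
have H3 : sumR (fun j => Rabs (T j c)) <= sumR (fun c => sumR (fun j => Rabs (T j c))).
  apply: (@sumR_term d (fun c => sumR (fun j => Rabs (T j c)))) => c'.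
  by apply: sumR_ge0 => j; apply: Rabs_pos.
have := Rabs_triang (p' c) (- q' c); rewrite Rabs_Ropp.
rewrite /Rminus; lra.
Qed.

Lemma meshfun_ge (M : mesh d) T y : List.In T M -> in_simplex T y -> diam T <= meshfun M y.
Proof.
move=> HT Hy; apply: (le_lub (Rsup_lub _ _)); last by right; exists T.
  by exists 0; left.
case: (list_ub M (fun T => Rabs (diam T))) => B HB.
exists (Rmax 0 B) => v [-> | [T' [HT' [_ ->]]]]; first exact: Rmax_l.
apply: Rle_trans (Rmax_r _ _); apply: Rle_trans (HB _ HT'); exact: Rle_abs.
Qed.

Lemma meshfun_ge0 (M : mesh d) y : 0 <= meshfun M y.
Proof.
apply: (le_lub (Rsup_lub _ _)); last by left.
  by exists 0; left.
case: (list_ub M (fun T => Rabs (diam T))) => B HB.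
exists (Rmax 0 B) => v [-> | [T' [HT' [_ ->]]]]; first exact: Rmax_l.
apply: Rle_trans (Rmax_r _ _); apply: Rle_trans (HB _ HT'); exact: Rle_abs.
Qed.

Lemma hmax_ge (M : mesh d) T : List.In T M -> diam T <= hmax M.
Proof.
move=> HT; apply: (le_lub (Rsup_lub _ _)); last by right; exists T.
  by exists 0; left.
case: (list_ub M (fun T => Rabs (diam T))) => B HB.
exists (Rmax 0 B) => v [-> | [T' [HT' ->]]]; first exact: Rmax_l.
apply: Rle_trans (Rmax_r _ _); apply: Rle_trans (HB _ HT'); exact: Rle_abs.
Qed.

End Geo.

Section Node.
Variable d : nat.

Lemma frob_ctrl (sg : mat d) (lam : vec d) (A : mat d) :
  frob (ctrl_prod sg lam) A =
  sumR (fun l => lam l * sumR (fun j => sg j l * sumR (fun i => sg i l * A i j))).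
Proof.
rewrite /frob /ctrl_prod.
rewrite (sumR_to (fun i => sumR (fun j => sumR (fun l => lam l * (sg j l * (sg i l * A i j)))))); last first.
  move=> i; apply: sumR_ext => j; rewrite -sumR_scalr; apply: sumR_ext => l; ring.
rewrite (sumR_to (fun i => sumR (fun l => sumR (fun j => lam l * (sg j l * (sg i l * A i j)))))); last first.
  by move=> i; rewrite sumR_swap.
rewrite sumR_swap; apply: sumR_ext => l.
rewrite sumR_swap -sumR_scal; apply: sumR_ext => j.
rewrite -sumR_scal -sumR_scal; apply: sumR_ext => i; ring.
Qed.

Lemma Lint_decomp (f : vec d -> R) kf s0 (ph : vec d -> R) xi z (B sg : mat d) lam c C :
  kf z = c -> c <> 0 -> sumR lam = C ->
  Lint f kf (s0 + xi) (fun w => ph w + xi) z B sg lam =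
  - sumR (fun l => lam l * ((ph (vadd z (vscale c (col sg l))) + ph (vadd z (vscale (- c) (col sg l))) - 2 * ph z) / (c * c)))
  + 2 * C * (s0 - ph z) / (c * c) + f z * root_d d (det B).
Proof.
move=> Hk Hc HC; rewrite /Lint Hk.
have Ev : forall l, vsub z (vscale c (col sg l)) = vadd z (vscale (- c) (col sg l)).
  by move=> l; apply: functional_extensionality => i; rewrite /vsub /vadd /vscale; ring.
rewrite (sumR_to (fun l => lam l * ((ph (vadd z (vscale c (col sg l))) + ph (vadd z (vscale (- c) (col sg l))) - 2 * ph z) / (c * c))
                   + lam l * (2 * (ph z - s0) / (c * c)))); last first.
  by move=> l; rewrite Ev /=; field.
rewrite sumR_split sumR_scalr HC; field; done.
Qed.

Lemma node_sd (Om : vec d -> Prop) phi (Dphi : 'I_d -> vec d -> R) (D2 : 'I_d -> 'I_d -> vec d -> R) x :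
  is_open Om ->
  (forall j y, Om y -> has_partial phi y j (Dphi j y)) -> (forall j, cont_on Om (Dphi j)) ->
  (forall j i y, Om y -> has_partial (Dphi j) y i (D2 j i y)) -> (forall j i, cont_on Om (D2 j i)) ->
  forall z c eta K (sg : mat d) (lam : vec d) C,
  0 < c -> 0 <= eta -> 0 <= K -> (forall i l, Rabs (sg i l) <= K) ->
  (forall l, 0 <= lam l) -> sumR lam = C ->
  (forall l t, -c <= t <= c -> Om (vadd z (vscale t (col sg l))) /\
       forall j i, Rabs (D2 j i (vadd z (vscale t (col sg l))) - D2 j i x) <= eta) ->
  Rabs (- sumR (fun l => lam l * ((phi (vadd z (vscale c (col sg l))) + phi (vadd z (vscale (- c) (col sg l))) - 2 * phi z) / (c * c)))
        + sumR (fun l => lam l * sumR (fun j => sg j l * sumR (fun i => sg i l * D2 j i x))))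
  <= C * (2 * (INR d * K) * ((INR d * K) * eta)).
Proof.
move=> Hop Hp1 Hc1 Hp2 Hc2 z c eta K sg lam C Hc Heta HK Hsg Hlam HC Hpts.
set E := 2 * (INR d * K) * ((INR d * K) * eta).
have HS : forall l, sumR (fun i => Rabs (col sg l i)) <= INR d * K.
  move=> l; rewrite -sumR_const; apply: sumR_le => i; exact: Hsg.
have HS0 : forall l, 0 <= sumR (fun i => Rabs (col sg l i)).
  by move=> l; apply: sumR_ge0 => i; apply: Rabs_pos.
have HdK : 0 <= INR d * K by apply: Rmult_le_pos => //; apply: pos_INR.
have Hl : forall l, Rabs ((phi (vadd z (vscale c (col sg l))) + phi (vadd z (vscale (- c) (col sg l))) - 2 * phi z) / (c * c)
              - sumR (fun j => sg j l * sumR (fun i => sg i l * D2 j i x))) <= E.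
  move=> l.
  have H := @second_diff d Om phi Dphi D2 Hop Hp1 Hc1 Hp2 Hc2 z (col sg l) c ((INR d * K) * eta)
     (fun j => sumR (fun i => sg i l * D2 j i x)) Hc (Rmult_le_pos _ _ HdK Heta).
  have H' : Rabs (phi (vadd z (vscale c (col sg l))) + phi (vadd z (vscale (- c) (col sg l))) - 2 * phi z -
     c * c * sumR (fun j => col sg l j * sumR (fun i => sg i l * D2 j i x))) <=
     2 * sumR (fun j => Rabs (col sg l j)) * (INR d * K * eta) * (c * c).
    apply: H.
      by move=> t Ht; case: (Hpts l t Ht).
    move=> j t Ht.
    rewrite -sumR_minus.
    rewrite (sumR_to (fun i => col sg l i * (D2 j i (vadd z (vscale t (col sg l))) - D2 j i x))); last first.
      by move=> i; rewrite /col; ring.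
    apply: Rle_trans (sumR_abs_bound _ _) _.
      by move=> i; case: (Hpts l t Ht) => _ H2; apply: H2.
    apply: Rmult_le_compat_r => //; exact: HS.
  rewrite /col in H'.
  have Hcc : 0 < c * c by nra.
  have -> : (phi (vadd z (vscale c (col sg l))) + phi (vadd z (vscale (- c) (col sg l))) - 2 * phi z) / (c * c) -
    sumR (fun j => sg j l * sumR (fun i => sg i l * D2 j i x)) =
    (phi (vadd z (vscale c (col sg l))) + phi (vadd z (vscale (- c) (col sg l))) - 2 * phi z -
     c * c * sumR (fun j => sg j l * sumR (fun i => sg i l * D2 j i x))) / (c * c) by field; lra.
  rewrite /Rdiv Rabs_mult Rabs_inv (Rabs_right (c * c)); last lra.
  apply: (Rmult_le_reg_r (c * c)) => //.
  rewrite Rmult_assoc Rinv_l; last lra.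
  rewrite Rmult_1_r; apply: Rle_trans H' _.
  rewrite /E; apply: Rmult_le_compat_r; first lra.
  apply: Rmult_le_compat_r; first by apply: Rmult_le_pos.
  apply: Rmult_le_compat_l; first lra.
  exact: HS l.
rewrite Rplus_comm -sumR_opp -sumR_split.
rewrite (sumR_to (fun l => lam l * (sumR (fun j => sg j l * sumR (fun i => sg i l * D2 j i x)) -
     (phi (vadd z (vscale c (col sg l))) + phi (vadd z (vscale (- c) (col sg l))) - 2 * phi z) / (c * c)))); last first.
  by move=> l; ring.
apply: Rle_trans (sumR_abs _) _.
rewrite -HC -sumR_scalr; apply: sumR_le => l.
rewrite Rabs_mult Rabs_right; last by apply: Rle_ge.
apply: Rmult_le_compat_l => //; rewrite Rabs_minus_sym; exact: Hl.
Qed.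

End Node.

Lemma sumR_swap2 n m (A : 'I_n -> 'I_m -> R) :
  sumR (fun i => sumR (fun j => A i j)) = sumR (fun j => sumR (fun i => A i j)).
Proof. by rewrite /sumR exchange_big. Qed.

Lemma interp_combine d (T : simplex d) y (mu : 'I_d.+1 -> R) (Hn : 'I_d.+1 -> R) Hc
   (ph : vec d -> R) (Dp : 'I_d -> R) C c E Rr :
  bary T y mu -> 0 <= C -> c <> 0 ->
  (forall i, Rabs (Hn i - (Hc + 2 * C * (ph y - ph (T i)) / (c * c))) <= E) ->
  (forall i, Rabs (ph (T i) - ph y - sumR (fun j => (T i j - y j) * Dp j)) <= Rr) ->
  Rabs (sumR (fun i => mu i * Hn i) - Hc) <= E + 2 * C * Rr / (c * c).
Proof.
move=> [Hmu [Hs Hy]] HC Hc0 HE HR.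
set a := fun i => 2 * C * (ph y - ph (T i)) / (c * c).
set L := fun i => sumR (fun j => (T i j - y j) * Dp j).
have HL : sumR (fun i => mu i * L i) = 0.
  rewrite /L (sumR_to (fun i => sumR (fun j => mu i * ((T i j - y j) * Dp j)))); last first.
    by move=> i; rewrite -sumR_scal.
  rewrite sumR_swap2 (sumR_to (fun j : 'I_d => 0 * Dp j)); first by rewrite sumR_scal; ring.
  move=> j; rewrite (sumR_to (fun i => (mu i * T i j - mu i * y j) * Dp j)); last by move=> i; ring.
  rewrite sumR_scalr sumR_minus sumR_scalr.
  change (sumR mu) with (\big[Rplus/0]_(i < d.+1) mu i); rewrite Hs.
  have -> : sumR (fun i => mu i * T i j) = y j by rewrite Hy.
  ring.
have Hcc : 0 < c * c by have := Rsqr_pos_lt c Hc0; rewrite /Rsqr.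
have -> : sumR (fun i => mu i * Hn i) - Hc =
   sumR (fun i => mu i * (Hn i - (Hc + a i))) - 2 * C / (c * c) * sumR (fun i => mu i * (ph (T i) - ph y - L i)).
  symmetry.
  rewrite -sumR_scal -sumR_minus.
  rewrite (sumR_to (fun i => (mu i * Hn i + mu i * (- Hc)) + 2 * C / (c * c) * (mu i * L i))); last first.
    by move=> i; rewrite /a; field; lra.
  rewrite sumR_split sumR_split sumR_scal HL sumR_scalr.
  change (sumR mu) with (\big[Rplus/0]_(i < d.+1) mu i); rewrite Hs; ring.
have Hmu1 : sumR mu = 1 by [].
apply: Rle_trans (Rabs_triang _ _) _; rewrite Rabs_Ropp; apply: Rplus_le_compat.
  apply: Rle_trans (sumR_abs _) _.
  rewrite -[X in _ <= X]Rmult_1_l -Hmu1 -sumR_scalr; apply: sumR_le => i.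
  rewrite Rabs_mult Rabs_right; last by apply: Rle_ge.
  apply: Rmult_le_compat_l => //; exact: HE.
rewrite Rabs_mult.
have -> : 2 * C * Rr / (c * c) = 2 * C / (c * c) * Rr by field; lra.
rewrite Rabs_right; last first.
  apply: Rle_ge; apply: Rmult_le_pos; [lra | apply: Rlt_le; apply: Rinv_0_lt_compat => //].
apply: Rmult_le_compat_l.
  apply: Rmult_le_pos; [lra | apply: Rlt_le; apply: Rinv_0_lt_compat => //].
apply: Rle_trans (sumR_abs _) _.
rewrite -[X in _ <= X]Rmult_1_l -Hmu1 -sumR_scalr; apply: sumR_le => i.
rewrite Rabs_mult Rabs_right; last by apply: Rle_ge.
apply: Rmult_le_compat_l => //; exact: HR.
Qed.

Lemma nat_above r : exists n : nat, r < INR n.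
Proof.
case: (archimed r) => H1 _.
case: (Z_lt_le_dec (up r) 0) => Hz.
  exists 0%nat; simpl; have : IZR (up r) < 0 by apply: IZR_lt.
  lra.
exists (Z.to_nat (up r)); rewrite INR_IZR_INZ Z2Nat.id //; lra.
Qed.

Lemma S1_nonempty d : (1 <= d)%coq_nat -> exists B : mat d, S1 B.
Proof.
move=> Hd.
have HdR : 1 <= INR d by apply: (le_INR 1).
exists (fun _ _ => / INR d); split; [split|].
- by [].
- move=> v.
  rewrite (sumR_to (fun i => v i * / INR d * sumR v)); last first.
    by move=> i; rewrite -sumR_scal; apply: sumR_ext => j; ring.
  rewrite sumR_scalr sumR_scalr.
  have : 0 < / INR d by apply: Rinv_0_lt_compat; lra.
  have := Rle_0_sqr (sumR v); nra.
- rewrite /trace sumR_const; field; lra.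
Qed.

Lemma ctrl_entry d (sg : mat d) (lam : vec d) K : (forall i j, Rabs (sg i j) <= K) -> (forall i, Rabs (lam i) <= K) ->
  forall i j, Rabs (ctrl_prod sg lam i j) <= INR d * (K * K * K).
Proof.
move=> Hs Hl i j; rewrite /ctrl_prod -sumR_const.
apply: Rle_trans (sumR_abs _) _; apply: sumR_le => l.
rewrite !Rabs_mult.
have := Rabs_pos (sg i l); have := Rabs_pos (lam l); have := Rabs_pos (sg j l).
have := Hs i l; have := Hl l; have := Hs j l.
move=> ? ? ? ? ? ?.
apply: Rmult_le_compat; try nra.
Qed.
Theorem lemma6p3 (d : nat) (Om : vec d -> Prop) (f g : vec d -> R)
    (F : mat d -> vec d -> Prop) (C : R)
    (Ms : nat -> mesh d) (k : nat -> vec d -> R) (x : vec d) (phi : vec d -> R) :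
  (2 <= d)%coq_nat ->
  is_open Om -> bounded_set Om -> strictly_convex Om ->
  (forall y, Om y -> 0 <= f y) -> bounded_on Om f -> cont_on Om f ->
  bounded_on (bdry Om) g -> cont_on (bdry Om) g ->
  controls_ok F C ->
  (* family of meshes with hh -> 0 *)
  (forall n, admissible_mesh Om (Ms n)) -> shape_regular Ms ->
  (forall eps, 0 < eps -> exists N, forall n, (N <= n)%coq_nat -> hmax (Ms n) < eps) ->
  (* the meshes exhaust Omega (implicit in the paper, see NOTES.md) *)
  (forall i, (1 <= i)%coq_nat -> exists h', 0 < h' /\ forall n, hmax (Ms n) < h' ->
       forall y, Omega_i Om i y -> Om_h (Ms n) y) ->
  (* stencil size *)
  (forall n y, Om y -> 0 < k n y) ->
  (forall n y sg lam j, Om_h (Ms n) y -> F sg lam ->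
       Om_bar_h (Ms n) (vadd y (vscale (k n y) (col sg j))) /\
       Om_bar_h (Ms n) (vsub y (vscale (k n y) (col sg j)))) ->
  (* (K1) *)
  (forall i, (1 <= i)%coq_nat -> forall eps, 0 < eps -> exists h', 0 < h' /\
       forall n, hmax (Ms n) < h' -> forall y, Omega_i Om i y ->
         meshfun (Ms n) y / k n y <= eps) ->
  (* (K2) *)
  (forall i, (1 <= i)%coq_nat -> exists h', 0 < h' /\ forall n, hmax (Ms n) < h' ->
       exists c, forall y, Omega_i Om i y -> k n y = c) ->
  (* (K3) *)
  (forall eps, 0 < eps -> exists h', 0 < h' /\ forall n, hmax (Ms n) < h' ->
       forall y, Om y -> k n y <= eps) ->
  Om x -> bounded_on (clos Om) phi -> Ck 4 Om phi ->
  (* limsup <= H(D^2 phi(x), f(x)) *)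
  (forall eps, 0 < eps -> exists del, 0 < del /\
     forall n y xi, hmax (Ms n) < del -> clos Om y -> vdist y x < del -> Rabs xi < del ->
       Sscheme f g F (Ms n) (k n) y (phi y + xi) (fun z => phi z + xi) / hmax (Ms n)
         <= Hcont (hessian phi x) (f x) + eps) /\
  (* liminf >= H(D^2 phi(x), f(x)) *)
  (forall eps, 0 < eps -> exists del, 0 < del /\
     forall n y xi, hmax (Ms n) < del -> clos Om y -> vdist y x < del -> Rabs xi < del ->
       Hcont (hessian phi x) (f x) - eps
         <= Sscheme f g F (Ms n) (k n) y (phi y + xi) (fun z => phi z + xi) / hmax (Ms n)).
Proof.
move=> Hd2 Hop Hbd Hconv Hf0 Hfb Hfc Hgb Hgc Hctrl Hadm Hsr Hh0 Hexh Hk0 Hsten HK1 HK2 HK3 Hx Hphib Hck.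
have Hd1 : (1 <= d)%coq_nat by lia.
have HdR : 2 <= INR d by apply: (le_INR 2).
case: Hctrl => [[K0 HK0] [_ [HS1 [Hsurj [_ [HC Hlam]]]]]].
set Kp := Rabs K0 + 1.
have HKp : 1 <= Kp by have := Rabs_pos K0; rewrite /Kp; lra.
have Hsgb : forall sg lam, F sg lam -> (forall i j, Rabs (sg i j) <= Kp) /\ (forall i, Rabs (lam i) <= Kp).
  move=> sg lam H; case: (HK0 sg lam H) => H1 H2; split.
    by move=> i j; have := H1 i j; have := Rle_abs K0; rewrite /Kp; lra.
  by move=> i; have := H2 i; have := Rle_abs K0; rewrite /Kp; lra.
case: Hck => _ [Du [Hp1 HDu]].
have Hc1 : forall j, cont_on Om (Du j) by move=> j; case: (HDu j).
pose D2 := fun j => epsilon (inhabits (fun (_ : 'I_d) (_ : vec d) => 0))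
   (fun D => (forall i y, Om y -> has_partial (Du j) y i (D i y)) /\ forall i, Ck 2 Om (D i)).
have HD2 : forall j, (forall i y, Om y -> has_partial (Du j) y i (D2 j i y)) /\ forall i, Ck 2 Om (D2 j i).
  move=> j; case: (HDu j) => _ H; exact: (epsilon_spec _ _ H).
have Hp2 : forall j i y, Om y -> has_partial (Du j) y i (D2 j i y) by move=> j; case: (HD2 j).
have Hc2 : forall j i, cont_on Om (D2 j i) by move=> j i; case: (HD2 j) => _ H; case: (H i).
case: (Hop x Hx) => r0 [Hr0 Hball].
have Hhess : hessian phi x = (fun i j => D2 j i x) := hessian_eq Hr0 Hball Hp1 Hp2.
rewrite Hhess.
set Hc := Hcont (fun i j => D2 j i x) (f x).
set bB := INR d * (Kp * Kp * Kp).
have HbB : 0 <= bB by rewrite /bB; apply: Rmult_le_pos; [apply: pos_INR | nra].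
set N1 := INR (size (index_enum {perm 'I_d})).
set Rb := Rmax 1 (N1 * bB ^ (size (index_enum 'I_d))).
have HRb1 : 1 <= Rb by apply: Rmax_l.
have Hentry : forall B : mat d, S1 B -> forall sg lam, F sg lam -> ctrl_prod sg lam = B -> forall i j, Rabs (B i j) <= bB.
  move=> B _ sg lam Hf <-; case: (Hsgb _ _ Hf) => H1 H2; exact: ctrl_entry.
have Hroot : forall B : mat d, S1 B -> 0 <= root_d d (det B) <= Rb.
  move=> B HB; case: (Hsurj B HB) => sg [lam [Hf Hcp]].
  have Hdet := det_bound HbB (Hentry B HB sg lam Hf Hcp).
  case: (root_d_bound (det B) Hd1) => H1 H2; split => //.
  apply: Rle_trans H2 _; apply: Rmax_lub; first exact: Rmax_l.
  apply: Rle_trans (Rmax_r 1 _); apply: Rle_trans (Rle_abs _) _; exact: Hdet.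
have Tbound : exists Mt, forall B : mat d, S1 B -> - frob B (fun i j => D2 j i x) + f x * root_d d (det B) <= Mt.
  exists (sumR (fun i => sumR (fun j => bB * Rabs (D2 j i x))) + Rabs (f x) * Rb) => B HB.
  case: (Hsurj B HB) => sg [lam [Hf Hcp]].
  have H1 : Rabs (frob B (fun i j => D2 j i x)) <= sumR (fun i => sumR (fun j => bB * Rabs (D2 j i x))).
    apply: Rle_trans (sumR_abs _) _; apply: sumR_le => i.
    apply: Rle_trans (sumR_abs _) _; apply: sumR_le => j.
    rewrite Rabs_mult; apply: Rmult_le_compat_r; first exact: Rabs_pos.
    exact: (Hentry B HB sg lam Hf Hcp).
  have H2 : f x * root_d d (det B) <= Rabs (f x) * Rb.
    apply: Rle_trans (Rle_abs _) _; rewrite Rabs_mult; apply: Rmult_le_compat_l; first exact: Rabs_pos.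
    case: (Hroot B HB) => ? ?; rewrite Rabs_right; lra.
  have := Rle_abs (- frob B (fun i j => D2 j i x)); rewrite Rabs_Ropp; lra.
set M := sumR (fun j => sumR (fun i => Rabs (D2 j i x))) + 1.
have HMb : forall j i, Rabs (D2 j i x) + 1 <= M.
  move=> j i; rewrite /M; apply: Rplus_le_compat_r.
  apply: Rle_trans (@sumR_term d (fun j => sumR (fun i => Rabs (D2 j i x))) j _).
    exact: (@sumR_term d (fun i => Rabs (D2 j i x)) i (fun _ => Rabs_pos _)).
  by move=> j'; apply: sumR_ge0 => i'; apply: Rabs_pos.
have HM1 : 1 <= M.
  rewrite /M; have : 0 <= sumR (fun j => sumR (fun i => Rabs (D2 j i x))); last lra.
  by apply: sumR_ge0 => j; apply: sumR_ge0 => i; apply: Rabs_pos.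
have main : forall eps, 0 < eps -> exists del, 0 < del /\ forall n y xi,
    hmax (Ms n) < del -> clos Om y -> vdist y x < del -> Rabs xi < del ->
    Rabs (Sscheme f g F (Ms n) (k n) y (phi y + xi) (fun z => phi z + xi) / hmax (Ms n) - Hc) <= eps.
  move=> eps Heps.
  set SK := INR d * Kp.
  have HSK : 2 <= SK by rewrite /SK; nra.
  set eta := Rmin 1 (eps / (8 * C * (SK * SK))).
  have HSS : 0 < SK * SK by nra.
  have HCSS : 0 < 8 * C * (SK * SK) by apply: Rmult_lt_0_compat; lra.
  have Heta : 0 < eta.
    apply: Rmin_pos; first lra; by apply: Rdiv_lt_0_compat.
  have Heta1 : eta <= 1 by apply: Rmin_l.
  have Heta2 : C * (2 * SK * (SK * eta)) <= eps / 4.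
    have : eta <= eps / (8 * C * (SK * SK)) by apply: Rmin_r.
    have H8 := HCSS.
    move=> H; have : eta * (8 * C * (SK * SK)) <= eps.
      apply: (Rmult_le_reg_r (/ (8 * C * (SK * SK)))); first by apply: Rinv_0_lt_compat.
      rewrite Rmult_assoc Rinv_r; [|lra]; rewrite Rmult_1_r; exact: H.
    lra.
  set etaf := eps / (4 * Rb).
  have Hetaf : 0 < etaf by apply: Rdiv_lt_0_compat; lra.
  have Hetaf2 : etaf * Rb = eps / 4 by rewrite /etaf; field; lra.
  set eps1 := Rmin 1 (eps / (8 * C * M * (INR d * INR d))).
  have Hdd : 0 < INR d * INR d by nra.
  have HCM : 0 < 8 * C * M * (INR d * INR d).
    apply: Rmult_lt_0_compat => //; apply: Rmult_lt_0_compat; lra.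
  have Heps1 : 0 < eps1.
    apply: Rmin_pos; first lra; by apply: Rdiv_lt_0_compat.
  have Heps11 : eps1 <= 1 by apply: Rmin_l.
  have Heps12 : 2 * C * M * (INR d * INR d) * eps1 <= eps / 4.
    have : eps1 <= eps / (8 * C * M * (INR d * INR d)) by apply: Rmin_r.
    have H8 := HCM.
    move=> H; have : eps1 * (8 * C * M * (INR d * INR d)) <= eps.
      apply: (Rmult_le_reg_r (/ (8 * C * M * (INR d * INR d)))); first by apply: Rinv_0_lt_compat.
      rewrite Rmult_assoc Rinv_r; [|lra]; rewrite Rmult_1_r; exact: H.
    lra.
  case: (@finmin_ord d (fun j del => forall i z, Om z -> vdist z x < del -> Rabs (D2 j i z - D2 j i x) < eta)).
  - move=> j a b Hab H i z Hz Hzd; apply: H => //; lra.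
  - move=> j; apply: (@finmin_ord d (fun i del => forall z, Om z -> vdist z x < del -> Rabs (D2 j i z - D2 j i x) < eta)).
      move=> i a b Hab H z Hz Hzd; apply: H => //; lra.
    move=> i; exact: (Hc2 j i x Hx eta Heta).
  move=> dD [HdD HD].
  case: (Hfc x Hx etaf Hetaf) => dF [HdF HF].
  set dall := Rmin r0 (Rmin dD dF).
  have Hdall : 0 < dall by apply: Rmin_pos => //; apply: Rmin_pos.
  have Hdall0 : dall <= r0 by apply: Rmin_l.
  have HdallD : dall <= dD by apply: Rle_trans (Rmin_r _ _) (Rmin_l _ _).
  have HdallF : dall <= dF by apply: Rle_trans (Rmin_r _ _) (Rmin_r _ _).
  set rho := dall / (2 * INR d).
  have Hrho : 0 < rho by apply: Rdiv_lt_0_compat; lra.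
  have Hrho2 : INR d * rho = dall / 2 by rewrite /rho; field; lra.
  pose Near z := forall c, Rabs (z c - x c) <= rho.
  have Near_dist : forall z, Near z -> vdist z x < dall.
    move=> z Hz; apply: Rle_lt_trans (vnorm_bound (Rlt_le _ _ Hrho) Hz) _; lra.
  have Near_Om : forall z, Near z -> Om z.
    move=> z Hz; apply: Hball; have := Near_dist z Hz; lra.
  have Near_D2 : forall z, Near z -> forall j i, Rabs (D2 j i z - D2 j i x) <= eta.
    move=> z Hz j i; apply: Rlt_le; apply: HD; first exact: Near_Om.
    have := Near_dist z Hz; lra.
  have Near_f : forall z, Near z -> Rabs (f z - f x) <= etaf.
    move=> z Hz; apply: Rlt_le; apply: HF; first exact: Near_Om.
    have := Near_dist z Hz; lra.
  case: (nat_above (2 * INR d / r0)) => n0 Hn0.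
  set i0 := S n0.
  have Hi0 : (1 <= i0)%coq_nat by rewrite /i0; lia.
  have Hinv : / INR i0 < r0 / (2 * INR d).
    have Hi0p : INR n0 < INR i0 by rewrite /i0 S_INR; lra.
    have Hpos : 0 < 2 * INR d / r0 by apply: Rdiv_lt_0_compat; lra.
    have : / INR i0 < / (2 * INR d / r0).
      apply: Rinv_lt_contravar; last lra.
      apply: Rmult_lt_0_compat => //; lra.
    have -> : / (2 * INR d / r0) = r0 / (2 * INR d) by field; lra.
    done.
  have Hrho_r0 : rho <= r0 / (2 * INR d).
    rewrite /rho; apply: Rmult_le_compat_r; last done.
    apply: Rlt_le; apply: Rinv_0_lt_compat; lra.
  have Near_Omi : forall z, Near z -> Omega_i Om i0 z.
    move=> z Hz; split; first exact: Near_Om.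
    exists (r0 / (2 * INR d)); split => // b [Hcl Hnb].
    have Hbx : r0 <= vdist x b.
      rewrite vdist_sym; case: (Rle_lt_dec r0 (vdist b x)) => // H.
      by case: Hnb; apply: Hball.
    have Hxb : vdist x b <= INR d * (rho + vdist z b).
      apply: vnorm_bound.
        have := vnorm_ge0 (vsub z b); rewrite /vdist in Hz *; lra.
      move=> c; rewrite /vsub.
      have H1 := Hz c; have H2 : Rabs (z c - b c) <= vdist z b := vnorm_coord (vsub z b) c.
      have := Rabs_triang (x c - z c) (z c - b c).
      have -> : x c - z c + (z c - b c) = x c - b c by ring.
      rewrite Rabs_minus_sym in H1; lra.
    have : r0 / INR d <= rho + vdist z b.
      apply: (Rmult_le_reg_l (INR d)); first lra.
      have -> : INR d * (r0 / INR d) = r0 by field; lra.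
      lra.
    have -> : r0 / INR d = 2 * (r0 / (2 * INR d)) by field; lra.
    lra.
  case: (Hexh i0 Hi0) => ha [Hha Hexa].
  case: (HK1 i0 Hi0 eps1 Heps1) => hb [Hhb HK1'].
  case: (HK2 i0 Hi0) => hc [Hhc HK2'].
  have Hk3e : 0 < rho / (3 * Kp) by apply: Rdiv_lt_0_compat; lra.
  case: (HK3 _ Hk3e) => hd [Hhd HK3'].
  set del := Rmin (Rmin ha hb) (Rmin (Rmin hc hd) (rho / (3 * Kp))).
  have Hdel : 0 < del.
    apply: Rmin_pos; apply: Rmin_pos => //; apply: Rmin_pos => //.
  have Hdel_a : del <= ha by rewrite /del; apply: Rle_trans (Rmin_l _ _) _; apply: Rmin_l.
  have Hdel_b : del <= hb by rewrite /del; apply: Rle_trans (Rmin_l _ _) _; apply: Rmin_r.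
  have Hdel_c : del <= hc.
    rewrite /del; apply: Rle_trans (Rmin_r _ _) _; apply: Rle_trans (Rmin_l _ _) _; apply: Rmin_l.
  have Hdel_d : del <= hd.
    rewrite /del; apply: Rle_trans (Rmin_r _ _) _; apply: Rle_trans (Rmin_l _ _) _; apply: Rmin_r.
  have Hdel_r : del <= rho / (3 * Kp) by rewrite /del; apply: Rle_trans (Rmin_r _ _) _; apply: Rmin_r.
  have Hdel_r3 : del <= rho / 3.
    apply: Rle_trans Hdel_r _; apply: Rmult_le_compat_l; first lra.
    apply: Rinv_le_contravar; lra.
  exists del; split => // n y xi Hhn Hycl Hyx Hxi.
  have Hyc : forall c, Rabs (y c - x c) < del.
    move=> c; apply: Rle_lt_trans (vnorm_coord (vsub y x) c) Hyx.
  have Hy : Near y by move=> c; have := Hyc c; lra.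
  case: (HK2' n (Rlt_le_trans _ _ _ Hhn Hdel_c)) => cst Hcst.
  have Hyk : k n y = cst := Hcst y (Near_Omi y Hy).
  have Hcst0 : 0 < cst by rewrite -Hyk; apply: Hk0; exact: Near_Om.
  have Hcst1 : cst <= rho / (3 * Kp).
    rewrite -Hyk; apply: (HK3' n (Rlt_le_trans _ _ _ Hhn Hdel_d)); exact: Near_Om.
  have HcKp : cst * Kp <= rho / 3.
    have : cst * Kp <= rho / (3 * Kp) * Kp by apply: Rmult_le_compat_r; lra.
    have -> : rho / (3 * Kp) * Kp = rho / 3 by field; lra.
    done.
  have Hyh : Om_h (Ms n) y := Hexa n (Rlt_le_trans _ _ _ Hhn Hdel_a) y (Near_Omi y Hy).
  have Hybar : Om_bar_h (Ms n) y.
    case: Hyh => r [Hr Hr']; apply: Hr'; rewrite vdist_refl; done.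
  rewrite /Sscheme /Hh /interp.
  set Hn := Hnode f g F (Ms n) (k n) (phi y + xi) (fun z => phi z + xi).
  have ex : exists w, exists T mu, List.In T (Ms n) /\ bary T y mu /\
             w = \big[Rplus/0]_(i < d.+1) (mu i * Hn (T i)).
    case: Hybar => T [HT [mu Hmu]]; by exists (\big[Rplus/0]_(i < d.+1) (mu i * Hn (T i))), T, mu.
  case: (epsilon_spec (inhabits 0) _ ex) => T [mu [HT [Hmu ->]]].
  have HyT : in_simplex T y by exists mu.
  have HdT : 0 < diam T by case: Hsr => csr [_ H]; case: (H n T HT).
  have HhT : diam T <= hmax (Ms n) := hmax_ge HT.
  have -> : hmax (Ms n) * \big[Rplus/0]_(i < d.+1) (mu i * Hn (T i)) / hmax (Ms n) =
            sumR (fun i : 'I_d.+1 => mu i * Hn (T i)) by rewrite /sumR; field; lra.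
  have Hvy : forall i, vdist (T i) y <= meshfun (Ms n) y.
    move=> i; apply: Rle_trans (diam_ge (vertex_in T i) HyT) _; exact: meshfun_ge.
  have Hvy' : forall i, vdist (T i) y < del.
    move=> i; apply: Rle_lt_trans (diam_ge (vertex_in T i) HyT) _; lra.
  have Hv2 : forall i c, Rabs (T i c - x c) <= 2 * del.
    move=> i c; have H1 : Rabs (T i c - y c) <= vdist (T i) y := vnorm_coord (vsub (T i) y) c.
    have := Hvy' i; have := Hyc c; have := Rabs_triang (T i c - y c) (y c - x c).
    have -> : T i c - y c + (y c - x c) = T i c - x c by ring.
    lra.
  have Hvnear : forall i, Near (T i) by move=> i c; have := Hv2 i c; lra.
  have Hvk : forall i, k n (T i) = cst by move=> i; apply: Hcst; apply: Near_Omi.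
  have Hmesh : meshfun (Ms n) y <= eps1 * cst.
    have H := HK1' n (Rlt_le_trans _ _ _ Hhn Hdel_b) y (Near_Omi y Hy).
    rewrite Hyk in H.
    apply: (Rmult_le_reg_r (/ cst)); first by apply: Rinv_0_lt_compat.
    rewrite Rmult_assoc Rinv_r; lra.
  have Hcst_ne : cst <> 0 by lra.
  set E := C * (2 * SK * (SK * eta)) + etaf * Rb.
  have Hnode_est : forall i, Rabs (Hn (T i) - (Hc + 2 * C * (phi y - phi (T i)) / (cst * cst))) <= E.
    move=> i; set z := T i.
    have Hzh : Om_h (Ms n) z := Hexa n (Rlt_le_trans _ _ _ Hhn Hdel_a) z (Near_Omi z (Hvnear i)).
    rewrite /Hn /Hnode; case: (excluded_middle_informative (Om_h (Ms n) z)) => [Hyes|Hno]; last by case: Hno.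
    rewrite /Hc /Hcont.
    apply: (sup_close (L := fun B sg lam => Lint f (k n) (phi y + xi) (fun w => phi w + xi) z B sg lam)
                      (T := fun B => - frob B (fun i j => D2 j i x) + f x * root_d d (det B))).
    - exact: S1_nonempty Hd1.
    - exact: Hsurj.
    - exact: Tbound.
    move=> B sg lam HB Hf Hcp.
    case: (Hlam _ _ Hf) => Hlam0 HlamC.
    case: (Hsgb _ _ Hf) => Hsg _.
    rewrite (Lint_decomp _ _ _ _ _ _ (Hvk i) Hcst_ne HlamC).
    have Hfr : frob B (fun i j => D2 j i x) = sumR (fun l => lam l * sumR (fun j => sg j l * sumR (fun i => sg i l * D2 j i x))).
      by rewrite -Hcp frob_ctrl.
    rewrite Hfr.
    have H1 := @node_sd d Om phi Du D2 x Hop Hp1 Hc1 Hp2 Hc2 z cst eta Kp sg lam C Hcst0 (Rlt_le _ _ Heta)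
       (Rle_trans _ _ _ (Rle_0_1) HKp) Hsg Hlam0 HlamC.
    have Hpts : forall l t, -cst <= t <= cst -> Om (vadd z (vscale t (col sg l))) /\
       forall j i, Rabs (D2 j i (vadd z (vscale t (col sg l))) - D2 j i x) <= eta.
      move=> l t Ht.
      have Hn' : Near (vadd z (vscale t (col sg l))).
        move=> c; rewrite /vadd /vscale /col.
        have := Hv2 i c; have := Hsg c l.
        have Ht' : Rabs t <= cst by split_Rabs; lra.
        have : Rabs (t * sg c l) <= cst * Kp.
          rewrite Rabs_mult; apply: Rmult_le_compat => //; apply: Rabs_pos.
        have := Rabs_triang (z c - x c) (t * sg c l).
        have -> : z c - x c + t * sg c l = z c + t * sg c l - x c by ring.
        rewrite /z; lra.
      split; [exact: Near_Om | exact: Near_D2].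
    have H2 := H1 Hpts.
    have Hfz := Near_f z (Hvnear i).
    case: (Hroot B HB) => Hr0' Hr1'.
    have H3 : Rabs ((f z - f x) * root_d d (det B)) <= etaf * Rb.
      rewrite Rabs_mult (Rabs_right (root_d d (det B))); last lra.
      apply: Rmult_le_compat => //; apply: Rabs_pos.
    set SD := sumR _ in H2.
    set SQ := sumR _ in H2.
    set a0 := 2 * C * (phi y - phi z) / (cst * cst).
    have -> : - SD + a0 + f z * root_d d (det B) - (- SQ + f x * root_d d (det B) + a0) =
       (- SD + SQ) + (f z - f x) * root_d d (det B) by ring.
    apply: Rle_trans (Rabs_triang _ _) _.
    rewrite /E /SK; lra.
  set hy := meshfun (Ms n) y.
  have Hhy0 : 0 <= hy := meshfun_ge0 (Ms n) y.
  have Hint_est : forall i, Rabs (phi (T i) - phi y - sumR (fun j => (T i j - y j) * Du j y))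
                     <= M * ((INR d * hy) * (INR d * hy)).
    move=> i.
    have Ew : vadd y (vsub (T i) y) = T i.
      by apply: functional_extensionality => c; rewrite /vadd /vsub; ring.
    have Hseg : forall t, 0 <= t <= 1 -> Near (vadd y (vscale t (vsub (T i) y))).
      move=> t Ht c; rewrite /vadd /vscale /vsub.
      have H1 : Rabs (T i c - y c) <= vdist (T i) y := vnorm_coord (vsub (T i) y) c.
      have := Hvy' i; have := Hyc c.
      have : Rabs (t * (T i c - y c)) <= Rabs (T i c - y c).
        rewrite Rabs_mult (Rabs_right t); last lra.
        have := Rabs_pos (T i c - y c); nra.
      have := Rabs_triang (y c - x c) (t * (T i c - y c)).
      have -> : y c - x c + t * (T i c - y c) = y c + t * (T i c - y c) - x c by ring.
      lra.
    have H := @interp_err d Om phi Du D2 Hop Hp1 Hc1 Hp2 Hc2 y (vsub (T i) y) M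
       (Rle_trans _ _ _ Rle_0_1 HM1).
    rewrite Ew in H.
    apply: Rle_trans (H _ _) _.
    - move=> t Ht; apply: Near_Om; exact: Hseg.
    - move=> j i' t Ht.
      have := Near_D2 _ (Hseg t Ht) j i'; have := HMb j i'.
      have := Rabs_triang (D2 j i' (vadd y (vscale t (vsub (T i) y))) - D2 j i' x) (D2 j i' x).
      have -> : D2 j i' (vadd y (vscale t (vsub (T i) y))) - D2 j i' x + D2 j i' x =
                D2 j i' (vadd y (vscale t (vsub (T i) y))) by ring.
      lra.
    have HSw : sumR (fun c => Rabs (vsub (T i) y c)) <= INR d * hy.
      apply: Rle_trans (l1_le _) _; apply: Rmult_le_compat_l; first exact: pos_INR.
      exact: Hvy.
    have HSw0 : 0 <= sumR (fun c => Rabs (vsub (T i) y c)) by apply: sumR_ge0 => c; apply: Rabs_pos.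
    apply: Rmult_le_compat_l; first lra.
    apply: Rmult_le_compat => //.
  have Hfin := @interp_combine d T y mu (fun i => Hn (T i)) Hc phi (fun j => Du j y) C cst E
      (M * ((INR d * hy) * (INR d * hy))) Hmu (Rlt_le _ _ HC) Hcst_ne Hnode_est Hint_est.
  apply: Rle_trans Hfin _.
  have Hhy : hy <= eps1 * cst := Hmesh.
  have Hq : 2 * C * (M * (INR d * hy * (INR d * hy))) / (cst * cst) <= 2 * C * M * (INR d * INR d) * eps1.
    have Hcc : 0 < cst * cst by nra.
    have -> : 2 * C * (M * (INR d * hy * (INR d * hy))) / (cst * cst) =
              2 * C * M * (INR d * INR d) * ((hy / cst) * (hy / cst)) by field; lra.
    have Hr : hy / cst <= eps1.
      apply: (Rmult_le_reg_r cst) => //; rewrite /Rdiv Rmult_assoc Rinv_l; lra.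
    have Hr00 : 0 <= hy / cst.
      by apply: Rmult_le_pos => //; apply: Rlt_le; apply: Rinv_0_lt_compat.
    have : (hy / cst) * (hy / cst) <= eps1 by nra.
    have : 0 <= 2 * C * M * (INR d * INR d) by nra.
    nra.
  rewrite /E; lra.
split=> eps Heps; case: (main eps Heps) => del [Hdel H]; exists del; split => // n y xi H1 H2 H3 H4;
  have := H n y xi H1 H2 H3 H4; rewrite /Hc; split_Rabs; lra.
Qed.
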